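(* For every $n\ge1$, there is an equivalence relation on $\mathbb{N}$ which is universal for $\Sigma^0_n$ equivalence relations on $\mathbb{N}$ under computable reductions and which is $\Pi^0_{n-1}$-graphable with diameter $3$.
   Context: $E$ is universal for $\Sigma^0_n$ equivalence relations on $\mathbb{N}$ if $E$ is a $\Sigma^0_n$ equivalence relation on $\mathbb{N}$ and every $\Sigma^0_n$ equivalence relation $F$ on $\mathbb{N}$ admits a total computable $f:\mathbb{N}\to\mathbb{N}$ with $nFm\iff f(n)Ef(m)$. $\Pi^0_0$ means computable. $E$ is $\Gamma$-graphable with diameter $k$ if there is a simple undirected graph $G$ in $\Gamma$ whose connectedness relation equals $E$ and $k$ is the least integer such that any two $G$-connected points are joined by a path of length at most $k$. *)

(* Defs.v *)
From Stdlib Require Import List Arith.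
Import ListNotations.

Inductive PR : Type :=
| PZero : PR
| PSucc : PR
| PProj : nat -> PR
| PComp : PR -> list PR -> PR
| PRec  : PR -> PR -> PR          (* primitive recursion on the first argument *)
| PMu   : PR -> PR.               (* unbounded minimization on the first argument *)

Inductive eval : PR -> list nat -> nat -> Prop :=
| eZero v : eval PZero v 0
| eSucc x v : eval PSucc (x :: v) (S x)
| eProj i v : i < length v -> eval (PProj i) v (nth i v 0)
| eComp f gs v ws y : evalList gs v ws -> eval f ws y -> eval (PComp f gs) v y
| eRec0 f g v y : eval f v y -> eval (PRec f g) (0 :: v) y
| eRecS f g n v r y :
    eval (PRec f g) (n :: v) r -> eval g (n :: r :: v) y -> eval (PRec f g) (S n :: v) y
| eMu f v y :
    eval f (y :: v) 0 ->
    (forall z, z < y -> exists w, eval f (z :: v) (S w)) ->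
    eval (PMu f) v y
with evalList : list PR -> list nat -> list nat -> Prop :=
| eLnil v : evalList [] v []
| eLcons g gs v w ws : eval g v w -> evalList gs v ws -> evalList (g :: gs) v (w :: ws).

Definition computable_fun (f : nat -> nat) : Prop :=
  exists c : PR, forall x, eval c [x] (f x).

Definition computable_rel (k : nat) (R : list nat -> Prop) : Prop :=
  exists c : PR, forall v, length v = k ->
    (R v -> eval c v 1) /\ (~ R v -> eval c v 0).

(* Arithmetical hierarchy for k-ary relations:
   Sigma^0_0 = computable;  Sigma^0_{m+1} = exists-projection of a Pi^0_m relation;
   Pi^0_m R  := Sigma^0_m of the complement of R. *)
Fixpoint Sigma (n k : nat) (R : list nat -> Prop) : Prop :=
  match n with
  | 0 => computable_rel k R
  | S m => exists T : list nat -> Prop,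
             Sigma m (S k) (fun v => ~ T v) /\
             (forall v, length v = k -> (R v <-> exists y, T (y :: v)))
  end.

Definition Pi (n k : nat) (R : list nat -> Prop) : Prop :=
  Sigma n k (fun v => ~ R v).

Definition rel2 (E : nat -> nat -> Prop) : list nat -> Prop :=
  fun v => match v with [a; b] => E a b | _ => False end.

Definition Sigma_rel (n : nat) (E : nat -> nat -> Prop) : Prop := Sigma n 2 (rel2 E).
Definition Pi_rel (n : nat) (E : nat -> nat -> Prop) : Prop := Pi n 2 (rel2 E).

Definition equivalence_rel (E : nat -> nat -> Prop) : Prop :=
  (forall a, E a a) /\ (forall a b, E a b -> E b a) /\
  (forall a b c, E a b -> E b c -> E a c).

Definition universal_Sigma (n : nat) (E : nat -> nat -> Prop) : Prop :=
  equivalence_rel E /\ Sigma_rel n E /\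
  forall F : nat -> nat -> Prop, equivalence_rel F -> Sigma_rel n F ->
    exists f : nat -> nat, computable_fun f /\
      forall a b, F a b <-> E (f a) (f b).

Inductive walk (G : nat -> nat -> Prop) : nat -> nat -> nat -> Prop :=
| walk0 a : walk G 0 a a
| walkS m a b c : G a b -> walk G m b c -> walk G (S m) a c.

Definition connected (G : nat -> nat -> Prop) (a b : nat) : Prop :=
  exists m, walk G m a b.

Definition simple_graph (G : nat -> nat -> Prop) : Prop :=
  (forall a, ~ G a a) /\ (forall a b, G a b -> G b a).

Definition diam_le (G : nat -> nat -> Prop) (k : nat) : Prop :=
  forall a b, connected G a b -> exists m, m <= k /\ walk G m a b.

Definition Pi_graphable_diam (p : nat) (E : nat -> nat -> Prop) (k : nat) : Prop :=
  exists G : nat -> nat -> Prop,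
    simple_graph G /\ Pi_rel p G /\
    (forall a b, connected G a b <-> E a b) /\
    diam_le G k /\ (forall j, diam_le G j -> k <= j).

(* Main.v *)
Require Import Defs.
From Stdlib Require Import List Arith Lia Cantor Classical Setoid Morphisms.
Import ListNotations.

Lemma ev_proj i v y : i < length v -> nth i v 0 = y -> eval (PProj i) v y.
Proof. intros H <-. now constructor. Qed.

Definition cAdd := PRec (PProj 0) (PComp PSucc [PProj 1]).
Lemma ev_add a b : eval cAdd [a;b] (a+b).
Proof.
  induction a; simpl.
  - apply eRec0. apply ev_proj; simpl; auto.
  - eapply eRecS. exact IHa. eapply eComp. constructor. apply ev_proj; simpl; auto; lia. constructor.
    constructor.
Qed.

Definition cMul := PRec PZero (PComp cAdd [PProj 1; PProj 2]).
Lemma ev_mul a b : eval cMul [a;b] (a*b).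
Proof.
  induction a; simpl.
  - apply eRec0. constructor.
  - eapply eRecS. exact IHa. eapply eComp. constructor. apply ev_proj; simpl; auto; lia.
    constructor. apply ev_proj; simpl; auto; lia. constructor.
    replace (b + a*b) with (a*b+b) by lia. apply ev_add.
Qed.

Definition cPred := PRec PZero (PProj 0).
Lemma ev_pred a : eval cPred [a] (pred a).
Proof.
  induction a; simpl.
  - apply eRec0. constructor.
  - eapply eRecS. exact IHa. apply ev_proj; simpl; auto; lia.
Qed.

Definition cSub' := PRec (PProj 0) (PComp cPred [PProj 1]).
Lemma ev_sub' b a : eval cSub' [b;a] (a-b).
Proof.
  induction b; simpl.
  - apply eRec0. apply ev_proj; simpl; auto; lia.
  - eapply eRecS. exact IHb. eapply eComp. constructor. apply ev_proj; simpl; auto; lia. constructor.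
    replace (a - S b) with (pred (a - b)) by lia. apply ev_pred.
Qed.

Definition cSub := PComp cSub' [PProj 1; PProj 0].
Lemma ev_sub a b : eval cSub [a;b] (a-b).
Proof.
  eapply eComp. constructor. apply ev_proj; simpl; auto; lia. constructor.
  apply ev_proj; simpl; auto; lia. constructor. apply ev_sub'.
Qed.

Inductive ex : Type :=
| V : nat -> ex
| K : nat -> ex
| Pl : ex -> ex -> ex
| Mi : ex -> ex -> ex
| Ti : ex -> ex -> ex
| Rc : ex -> ex -> ex -> ex
| Sm : ex -> ex -> ex
| Cl : ex -> list ex -> ex.

Section ExInd.
Variable P : ex -> Prop.
Hypothesis hV : forall i, P (V i).
Hypothesis hK : forall n, P (K n).
Hypothesis hPl : forall a b, P a -> P b -> P (Pl a b).
Hypothesis hMi : forall a b, P a -> P b -> P (Mi a b).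
Hypothesis hTi : forall a b, P a -> P b -> P (Ti a b).
Hypothesis hRc : forall a b c, P a -> P b -> P c -> P (Rc a b c).
Hypothesis hSm : forall a b, P a -> P b -> P (Sm a b).
Hypothesis hCl : forall f args, P f -> Forall P args -> P (Cl f args).
Fixpoint ex_ind' (e : ex) : P e :=
  match e with
  | V i => hV i
  | K n => hK n
  | Pl a b => hPl a b (ex_ind' a) (ex_ind' b)
  | Mi a b => hMi a b (ex_ind' a) (ex_ind' b)
  | Ti a b => hTi a b (ex_ind' a) (ex_ind' b)
  | Rc a b c => hRc a b c (ex_ind' a) (ex_ind' b) (ex_ind' c)
  | Sm a b => hSm a b (ex_ind' a) (ex_ind' b)
  | Cl f args => hCl f args (ex_ind' f)
      ((fix go (l : list ex) : Forall P l :=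
         match l with [] => Forall_nil _ | a :: l' => Forall_cons _ (ex_ind' a) (go l') end) args)
  end.
End ExInd.

Fixpoint sumN (N : nat) (f : nat -> nat) : nat :=
  match N with 0 => 0 | S N' => sumN N' f + f N' end.
Fixpoint recN (N : nat) (z : nat) (s : nat -> nat -> nat) : nat :=
  match N with 0 => z | S N' => s N' (recN N' z s) end.

Fixpoint den (e : ex) (env : list nat) : nat :=
  match e with
  | V i => nth i env 0
  | K n => n
  | Pl a b => den a env + den b env
  | Mi a b => den a env - den b env
  | Ti a b => den a env * den b env
  | Rc n z s => recN (den n env) (den z env) (fun i r => den s (i :: r :: env))
  | Sm n b => sumN (den n env) (fun i => den b (i :: env))
  | Cl f args => den f (map (fun a => den a env) args)
  end.

Fixpoint projs_from (s k : nat) : list PR :=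
  match k with 0 => [] | S k' => PProj s :: projs_from (S s) k' end.
Definition cK n := Nat.iter n (fun c => PComp PSucc [c]) PZero.

Fixpoint comp (k : nat) (e : ex) : PR :=
  match e with
  | V i => if i <? k then PProj i else PZero
  | K n => cK n
  | Pl a b => PComp cAdd [comp k a; comp k b]
  | Mi a b => PComp cSub [comp k a; comp k b]
  | Ti a b => PComp cMul [comp k a; comp k b]
  | Rc n z s => PComp (PRec (comp k z) (comp (S (S k)) s)) (comp k n :: projs_from 0 k)
  | Sm n b => PComp (PRec PZero (PComp cAdd [PProj 1; PComp (comp (S k) b) (PProj 0 :: projs_from 2 k)]))
                    (comp k n :: projs_from 0 k)
  | Cl f args => PComp (comp (length args) f) (map (comp k) args)
  end.

Lemma ev_projs s k l : s + k <= length l -> evalList (projs_from s k) l (firstn k (skipn s l)).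
Proof.
  revert s. induction k; intros s H; simpl. constructor.
  assert (Hs: skipn s l = nth s l 0 :: skipn (S s) l).
  { clear -H. revert l H. induction s; intros [|x l] H; simpl in *; try lia; auto.
    apply IHs. lia. }
  rewrite Hs. simpl. constructor. constructor. lia. apply IHk. lia.
Qed.

Lemma ev_projs0 l : evalList (projs_from 0 (length l)) l l.
Proof. pose proof (ev_projs 0 (length l) l). rewrite firstn_all in H. apply H. lia. Qed.

Lemma ev_projs2 i r l : evalList (projs_from 2 (length l)) (i :: r :: l) l.
Proof. pose proof (ev_projs 2 (length l) (i::r::l)). simpl in H. rewrite firstn_all in H. apply H. lia. Qed.

Lemma ev_K n v : eval (cK n) v n.
Proof. induction n; simpl. constructor. eapply eComp. constructor. exact IHn. constructor. constructor. Qed.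

Lemma comp_ok : forall e k env, length env = k -> eval (comp k e) env (den e env).
Proof.
  induction e using ex_ind'; intros k env Hl; simpl; subst k.
  - destruct (Nat.ltb_spec i (length env)). constructor; lia.
    rewrite nth_overflow by lia. constructor.
  - apply ev_K.
  - eapply eComp. repeat constructor; eauto. apply ev_add.
  - eapply eComp. repeat constructor; eauto. apply ev_sub.
  - eapply eComp. repeat constructor; eauto. apply ev_mul.
  - eapply eComp. constructor. apply IHe1; auto. apply ev_projs0.
    induction (den e1 env); simpl.
    + apply eRec0. auto.
    + eapply eRecS. eauto. apply IHe3. simpl; lia.
  - eapply eComp. constructor. apply IHe1; auto. apply ev_projs0.
    induction (den e1 env); simpl.
    + apply eRec0. constructor.
    + eapply eRecS. eauto. eapply eComp. constructor. apply ev_proj; simpl; auto; lia.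
      constructor. eapply eComp. constructor. constructor. simpl; lia. apply ev_projs2.
      apply IHe2. simpl; lia. constructor. apply ev_add.
  - eapply eComp. 2: apply IHe; rewrite length_map; reflexivity.
    induction H; simpl; constructor; auto.
Qed.

Inductive fm : Type :=
| FT : ex -> fm
| FEq : ex -> ex -> fm
| FLt : ex -> ex -> fm
| FAnd : fm -> fm -> fm
| FOr : fm -> fm -> fm
| FNot : fm -> fm
| FImpl : fm -> fm -> fm
| FEx : ex -> fm -> fm
| FAll : ex -> fm -> fm.

Fixpoint toEx (f : fm) : ex :=
  match f with
  | FT e => e
  | FEq a b => Mi (K 1) (Pl (Mi a b) (Mi b a))
  | FLt a b => Mi b a
  | FAnd f g => Ti (toEx f) (toEx g)
  | FOr f g => Pl (toEx f) (toEx g)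
  | FNot f => Mi (K 1) (toEx f)
  | FImpl f g => Pl (Mi (K 1) (toEx f)) (toEx g)
  | FEx n f => Sm n (toEx f)
  | FAll n f => Mi (K 1) (Sm n (Mi (K 1) (toEx f)))
  end.

Fixpoint sat (f : fm) (env : list nat) : Prop :=
  match f with
  | FT e => den e env <> 0
  | FEq a b => den a env = den b env
  | FLt a b => den a env < den b env
  | FAnd f g => sat f env /\ sat g env
  | FOr f g => sat f env \/ sat g env
  | FNot f => ~ sat f env
  | FImpl f g => sat f env -> sat g env
  | FEx n f => exists i, i < den n env /\ sat f (i :: env)
  | FAll n f => forall i, i < den n env -> sat f (i :: env)
  end.

Lemma sumN_nz N g : sumN N g <> 0 <-> exists i, i < N /\ g i <> 0.
Proof.
  induction N; simpl. split. lia. intros (i & H & _); lia.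
  split.
  - intros H. destruct (g N) eqn:E. rewrite Nat.add_0_r in H. apply IHN in H.
    destruct H as (i & ? & ?). exists i; split; auto; lia.
    exists N. split; lia.
  - intros (i & H1 & H2). destruct (Nat.eq_dec i N). subst; lia.
    assert (sumN N g <> 0). apply IHN. exists i; split; auto; lia. lia.
Qed.

Lemma toEx_ok f env : den (toEx f) env <> 0 <-> sat f env.
Proof.
  revert env; induction f; intros env; cbn [toEx sat den].
  - tauto.
  - lia.
  - lia.
  - rewrite <- IHf1, <- IHf2. lia.
  - rewrite <- IHf1, <- IHf2. lia.
  - rewrite <- IHf. lia.
  - rewrite <- IHf1, <- IHf2. destruct (Nat.eq_dec (den (toEx f1) env) 0); split; intros; lia.
  - rewrite sumN_nz. split; intros (i & ? & ?); exists i; split; auto; apply IHf; auto.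
  - split.
    + intros H i Hi. apply IHf. intro E. apply H.
      assert (sumN (den e env) (fun i => 1 - den (toEx f) (i :: env)) <> 0). apply sumN_nz.
      exists i. split; auto. rewrite E; lia. lia.
    + intros H. assert (sumN (den e env) (fun i => 1 - den (toEx f) (i :: env)) = 0).
      { destruct (Nat.eq_dec (sumN (den e env) (fun i => 1 - den (toEx f) (i :: env))) 0); auto.
        apply sumN_nz in n. destruct n as (i & H1 & H2). apply H in H1. apply IHf in H1. lia. }
      lia.
Qed.

Definition sgE (e : ex) : ex := Mi (K 1) (Mi (K 1) e).
Definition toB (f : fm) : ex := sgE (toEx f).
Lemma toB_1 f env : sat f env -> den (toB f) env = 1.
Proof. intros H. apply toEx_ok in H. unfold toB, sgE. cbn [den]. lia. Qed.
Lemma toB_0 f env : ~ sat f env -> den (toB f) env = 0.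
Proof. intros H. rewrite <- toEx_ok in H. unfold toB, sgE. cbn [den]. lia. Qed.

Lemma sat_toB f env : sat (FT (toB f)) env <-> sat f env.
Proof. cbn [sat]. rewrite <- toEx_ok. unfold toB, sgE. cbn [den]. lia. Qed.

Definition pair (x y : nat) : nat := Cantor.to_nat (x, y).
Definition p1 (n : nat) : nat := fst (Cantor.of_nat n).
Definition p2 (n : nat) : nat := snd (Cantor.of_nat n).

Lemma p1_pair x y : p1 (pair x y) = x.
Proof. unfold p1, pair. rewrite cancel_of_to. reflexivity. Qed.
Lemma p2_pair x y : p2 (pair x y) = y.
Proof. unfold p2, pair. rewrite cancel_of_to. reflexivity. Qed.
Lemma pair_p n : pair (p1 n) (p2 n) = n.
Proof. unfold p1, p2, pair. rewrite <- surjective_pairing. apply cancel_to_of. Qed.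
Lemma pair_inj x y x' y' : pair x y = pair x' y' -> x = x' /\ y = y'.
Proof. intros H. pose proof (f_equal p1 H). pose proof (f_equal p2 H).
  rewrite !p1_pair in *. rewrite !p2_pair in *. auto. Qed.
Lemma pair_ge x y : x + y <= pair x y.
Proof. unfold pair. pose proof (to_nat_non_decreasing x y). lia. Qed.

Definition pairF : ex := Pl (V 1) (Sm (Pl (V 1) (V 0)) (Pl (V 0) (K 1))).
Lemma den_pairF x y : den pairF [x; y] = pair x y.
Proof.
  unfold pairF, pair, to_nat. simpl. f_equal.
  induction (y + x); simpl; auto. rewrite IHn. lia.
Qed.
Definition pairE a b := Cl pairF [a; b].
Lemma den_pairE a b env : den (pairE a b) env = pair (den a env) (den b env).
Proof. apply den_pairF. Qed.

Lemma sumN_single N f i0 : i0 < N -> (forall i, i < N -> i <> i0 -> f i = 0) -> sumN N f = f i0.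
Proof.
  induction N; intros H1 H2; simpl. lia.
  destruct (Nat.eq_dec i0 N).
  - subst. assert (sumN N f = 0). { clear -H2. induction N; simpl; auto.
      rewrite IHN. rewrite H2; lia. intros; apply H2; lia. } lia.
  - rewrite IHN; try lia. rewrite (H2 N); lia. intros; apply H2; lia.
Qed.

Definition p1F : ex :=
  Sm (Pl (V 0) (K 1)) (Ti (V 0) (toB (FEx (Pl (V 1) (K 1)) (FEq (pairE (V 1) (V 0)) (V 2))))).
Definition p2F : ex :=
  Sm (Pl (V 0) (K 1)) (Ti (V 0) (toB (FEx (Pl (V 1) (K 1)) (FEq (pairE (V 0) (V 1)) (V 2))))).

Lemma den_p1F p : den p1F [p] = p1 p.
Proof.
  unfold p1F. cbn [den map nth]. rewrite (sumN_single _ _ (p1 p)).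
  - rewrite toB_1. lia. cbn [sat den nth map]. exists (p2 p). rewrite den_pairE. cbn [sat den nth map]. rewrite pair_p.
    split; auto. pose proof (pair_ge (p1 p) (p2 p)). rewrite pair_p in H. lia.
  - pose proof (pair_ge (p1 p) (p2 p)). rewrite pair_p in H. lia.
  - intros i Hi Hne. rewrite toB_0. lia. cbn [sat den nth map]. intros (y & _ & Hy). rewrite den_pairE in Hy.
    cbn [sat den nth map] in Hy. apply Hne. rewrite <- Hy. symmetry; apply p1_pair.
Qed.
Lemma den_p2F p : den p2F [p] = p2 p.
Proof.
  unfold p2F. cbn [sat den nth map]. rewrite (sumN_single _ _ (p2 p)).
  - rewrite toB_1. lia. cbn [sat den nth map]. exists (p1 p). rewrite den_pairE. cbn [sat den nth map]. rewrite pair_p.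
    split; auto. pose proof (pair_ge (p1 p) (p2 p)). rewrite pair_p in H. lia.
  - pose proof (pair_ge (p1 p) (p2 p)). rewrite pair_p in H. lia.
  - intros i Hi Hne. rewrite toB_0. lia. cbn [sat den nth map]. intros (y & _ & Hy). rewrite den_pairE in Hy.
    cbn [sat den nth map] in Hy. apply Hne. rewrite <- Hy. symmetry; apply p2_pair.
Qed.
Definition p1E a := Cl p1F [a].
Definition p2E a := Cl p2F [a].
Lemma den_p1E a env : den (p1E a) env = p1 (den a env).
Proof. apply den_p1F. Qed.
Lemma den_p2E a env : den (p2E a) env = p2 (den a env).
Proof. apply den_p2F. Qed.

Fixpoint clist (l : list nat) : nat :=
  match l with [] => 0 | x :: l' => S (pair x (clist l')) end.
Definition hdN (L : nat) := p1 (L - 1).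
Definition tlN (L : nat) := p2 (L - 1).
Definition consN x L := S (pair x L).
Definition iterTl (j L : nat) := recN j L (fun _ r => tlN r).
Definition nthN j L := hdN (iterTl j L).

Lemma hdN_cons x l : hdN (clist (x :: l)) = x.
Proof. unfold hdN; simpl. rewrite Nat.sub_0_r. apply p1_pair. Qed.
Lemma tlN_cons x l : tlN (clist (x :: l)) = clist l.
Proof. unfold tlN; simpl. rewrite Nat.sub_0_r. apply p2_pair. Qed.
Lemma tlN_0 : tlN 0 = 0.
Proof. reflexivity. Qed.
Lemma iterTl_clist j l : iterTl j (clist l) = clist (skipn j l).
Proof.
  unfold iterTl. induction j; simpl; auto.
  rewrite IHj. assert (forall m, tlN (clist m) = clist (skipn 1 m)).
  { intros [|x m]. reflexivity. apply tlN_cons. }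
  rewrite H. f_equal. rewrite skipn_skipn. reflexivity.
Qed.
Lemma clist_0 l : clist l = 0 <-> l = [].
Proof. destruct l; simpl; split; congruence. Qed.
Lemma iterTl_nz j l : iterTl j (clist l) <> 0 <-> j < length l.
Proof.
  rewrite iterTl_clist. rewrite clist_0. split.
  - intros H. destruct (Nat.lt_ge_cases j (length l)); auto. exfalso. apply H.
    apply skipn_all2. auto.
  - intros H E. apply (f_equal (@length nat)) in E. rewrite length_skipn in E. simpl in E. lia.
Qed.
Lemma nthN_clist j l : j < length l -> nthN j (clist l) = nth j l 0.
Proof.
  intros H. unfold nthN. rewrite iterTl_clist. revert l H; induction j; intros [|x l] H; simpl in *; try lia.
  apply hdN_cons. apply IHj. lia.
Qed.
Lemma length_le_clist l : length l <= clist l.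
Proof. induction l; simpl; auto. pose proof (pair_ge a (clist l)). lia. Qed.

Fixpoint decf (fuel n : nat) : list nat :=
  match fuel with 0 => [] | S f => match n with 0 => [] | S n' => p1 n' :: decf f (p2 n') end end.
Lemma decf_ok fuel n : n <= fuel -> clist (decf fuel n) = n.
Proof.
  revert n; induction fuel; intros n H; simpl. destruct n; auto; lia.
  destruct n; simpl; auto. rewrite IHfuel. rewrite pair_p. auto.
  pose proof (pair_ge (p1 n) (p2 n)). rewrite pair_p in H0. lia.
Qed.
Lemma clist_surj n : exists l, clist l = n.
Proof. exists (decf n n). apply decf_ok. auto. Qed.
Lemma clist_inj l l' : clist l = clist l' -> l = l'.
Proof.
  revert l'; induction l; intros [|x l'] H; simpl in *; try congruence.
  injection H as H. apply pair_inj in H. destruct H; subst. f_equal. auto.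
Qed.

Definition consE a b := Pl (K 1) (pairE a b).
Definition hdE L := p1E (Mi L (K 1)).
Definition tlE L := p2E (Mi L (K 1)).
Definition itF := Rc (V 0) (V 1) (tlE (V 1)).
Definition itE j L := Cl itF [j; L].
Definition nthE j L := hdE (itE j L).

Lemma den_consE a b env : den (consE a b) env = consN (den a env) (den b env).
Proof. unfold consE. cbn [den]. rewrite den_pairE. reflexivity. Qed.
Lemma den_hdE a env : den (hdE a) env = hdN (den a env).
Proof. unfold hdE. rewrite den_p1E. reflexivity. Qed.
Lemma den_tlE a env : den (tlE a) env = tlN (den a env).
Proof. unfold tlE. rewrite den_p2E. reflexivity. Qed.
Lemma den_itE j L env : den (itE j L) env = iterTl (den j env) (den L env).
Proof.
  unfold itE, itF, iterTl. cbn [den map nth]. generalize (den L env). induction (den j env); intros; cbn [recN]; auto.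
  rewrite den_tlE. cbn [den nth]. rewrite IHn. reflexivity.
Qed.
Lemma den_nthE j L env : den (nthE j L) env = nthN (den j env) (den L env).
Proof. unfold nthE. rewrite den_hdE, den_itE. reflexivity. Qed.
Lemma consN_clist x l : consN x (clist l) = clist (x :: l).
Proof. reflexivity. Qed.

#[global] Opaque pairE p1E p2E consE hdE tlE itE nthE.

Fixpoint code (c : PR) : nat :=
  match c with
  | PZero => pair 0 0
  | PSucc => pair 1 0
  | PProj i => pair 2 i
  | PComp f gs => pair 3 (pair (code f) (clist (map code gs)))
  | PRec f g => pair 4 (pair (code f) (code g))
  | PMu f => pair 5 (code f)
  end.

Definition trip c v y := pair c (pair v y).

Definition laterN (j J d : nat) : Prop :=
  exists j', j' < d /\ (j < j' /\ (iterTl j' d <> 0 /\ p1 (nthN j' d) = J)).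
Definition laterNZN (j f v d : nat) : Prop :=
  exists j', j' < d /\ (j < j' /\ (iterTl j' d <> 0 /\
     (p1 (p1 (nthN j' d)) = f /\ (p1 (p2 (p1 (nthN j' d))) = v /\ p2 (p2 (p1 (nthN j' d))) <> 0)))).

Definition locS' (c v y aux : nat) (lat : nat -> Prop) (latNZ : nat -> nat -> Prop) : Prop :=
  (p1 c = 0 /\ y = 0) \/
  (p1 c = 1 /\ (v <> 0 /\ y = hdN v + 1)) \/
  (p1 c = 2 /\ (iterTl (p2 c) v <> 0 /\ y = nthN (p2 c) v)) \/
  (p1 c = 3 /\ (lat (trip (p1 (p2 c)) aux y) /\
     ((forall i, i < p2 (p2 c) + aux + 1 ->
        ((iterTl i (p2 (p2 c)) <> 0 -> iterTl i aux <> 0) /\ (iterTl i aux <> 0 -> iterTl i (p2 (p2 c)) <> 0))) /\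
      (forall i, i < p2 (p2 c) + 1 -> (iterTl i (p2 (p2 c)) <> 0 ->
          lat (trip (nthN i (p2 (p2 c))) v (nthN i aux))))))) \/
  (p1 c = 4 /\ (v <> 0 /\
     ((hdN v = 0 /\ lat (trip (p1 (p2 c)) (tlN v) y)) \/
      (hdN v <> 0 /\ (lat (trip c (consN (hdN v - 1) (tlN v)) aux) /\
                     lat (trip (p2 (p2 c)) (consN (hdN v - 1) (consN aux (tlN v))) y)))))) \/
  (p1 c = 5 /\ (lat (trip (p2 c) (consN y v) 0) /\
     (forall z, z < y -> latNZ (p2 c) (consN z v)))).

Definition locN (j d : nat) : Prop :=
  let nd := nthN j d in
  locS' (p1 (p1 nd)) (p1 (p2 (p1 nd))) (p2 (p2 (p1 nd))) (p2 nd)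
        (fun J => laterN j J d) (fun f v => laterNZN j f v d).

Lemma locS'_mono c v y aux (lat lat' : nat -> Prop) (lz lz' : nat -> nat -> Prop) :
  (forall J, lat J -> lat' J) -> (forall f v, lz f v -> lz' f v) ->
  locS' c v y aux lat lz -> locS' c v y aux lat' lz'.
Proof.
  intros H1 H2. unfold locS'. intros H.
  destruct H as [H|[H|[H|[H|[H|H]]]]].
  - left; auto.
  - right; left; auto.
  - right; right; left; auto.
  - right; right; right; left. destruct H as (Ht & Hl & Hlen & Hall). split; [auto|]. split; [auto|]. split; [auto|].
    intros i Hi Hn; apply H1; apply Hall; auto.
  - right; right; right; right; left. destruct H as (? & ? & [(? & ?)|(? & ? & ?)]); repeat split; auto.
  - right; right; right; right; right. destruct H as (? & ? & ?). repeat split; auto.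
Qed.

Definition tripE c v y := pairE c (pairE v y).
Lemma den_tripE c v y env : den (tripE c v y) env = trip (den c env) (den v env) (den y env).
Proof. unfold tripE. rewrite !den_pairE. reflexivity. Qed.
#[global] Opaque tripE.

Lemma ex_iff {A} (P Q : A -> Prop) : (forall x, P x <-> Q x) -> ((exists x, P x) <-> (exists x, Q x)).
Proof. intros H; split; intros [x Hx]; exists x; apply H; auto. Qed.
Lemma all_iff {A} (P Q : A -> Prop) : (forall x, P x <-> Q x) -> ((forall x, P x) <-> (forall x, Q x)).
Proof. intros H; split; intros Hx x; apply H; auto. Qed.

Definition FImp f g := FOr (FNot f) g.
Definition FNe a b := FNot (FEq a b).

Definition callF (f : fm) (args : list ex) : fm := FT (Cl (toB f) args).
Lemma sat_callF f args env : sat (callF f args) env <-> sat f (map (fun a => den a env) args).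
Proof. unfold callF. change (sat (FT (toB f)) (map (fun a => den a env) args) <-> sat f (map (fun a => den a env) args)). apply sat_toB. Qed.

Definition laterF : fm :=
  FEx (V 2) (FAnd (FLt (V 1) (V 0)) (FAnd (FT (itE (V 0) (V 3))) (FEq (p1E (nthE (V 0) (V 3))) (V 2)))).
Definition laterE j J d := callF laterF [j; J; d].
Lemma sat_laterE j J d env : sat (laterE j J d) env <-> laterN (den j env) (den J env) (den d env).
Proof.
  unfold laterE. rewrite sat_callF. unfold laterF, laterN. cbn [sat den map nth].
  setoid_rewrite den_itE. setoid_rewrite den_p1E. setoid_rewrite den_nthE. cbn [den nth]. reflexivity.
Qed.

Definition laterNZF : fm :=
  FEx (V 3) (FAnd (FLt (V 1) (V 0)) (FAnd (FT (itE (V 0) (V 4)))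
    (FAnd (FEq (p1E (p1E (nthE (V 0) (V 4)))) (V 2))
     (FAnd (FEq (p1E (p2E (p1E (nthE (V 0) (V 4))))) (V 3))
           (FNe (p2E (p2E (p1E (nthE (V 0) (V 4))))) (K 0)))))).
Definition laterNZE j f v d := callF laterNZF [j; f; v; d].
Lemma sat_laterNZE j f v d env : sat (laterNZE j f v d) env <-> laterNZN (den j env) (den f env) (den v env) (den d env).
Proof.
  unfold laterNZE. rewrite sat_callF. unfold laterNZF, laterNZN, FNe. cbn [sat den map nth].
  apply ex_iff; intro i. rewrite den_itE. rewrite !den_p1E, !den_p2E, !den_p1E, den_nthE. cbn [den nth]. reflexivity.
Qed.

Lemma iff_and A B A' B' : (A <-> A') -> (B <-> B') -> (A /\ B <-> A' /\ B').
Proof. tauto. Qed.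
Lemma iff_or A B A' B' : (A <-> A') -> (B <-> B') -> (A \/ B <-> A' \/ B').
Proof. tauto. Qed.
Lemma iff_not A A' : (A <-> A') -> (~ A <-> ~ A').
Proof. tauto. Qed.
Lemma iff_imp A B A' B' : (A <-> A') -> (B <-> B') -> ((A -> B) <-> (A' -> B')).
Proof. tauto. Qed.
Lemma iff_all_lt N N' (P Q : nat -> Prop) : N = N' -> (forall i, i < N -> (P i <-> Q i)) ->
  ((forall i, i < N -> P i) <-> (forall i, i < N' -> Q i)).
Proof. intros <- H. split; intros H' i Hi; apply H; auto. Qed.

Ltac leaf := repeat (first [rewrite sat_laterE | rewrite sat_laterNZE | rewrite den_p1E | rewrite den_p2E
   | rewrite den_itE | rewrite den_nthE | rewrite den_hdE | rewrite den_tlE | rewrite den_consE | rewrite den_tripE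
   | progress cbn [den nth]]); try reflexivity.

Ltac iffs :=
  match goal with
  | |- (_ /\ _) <-> (_ /\ _) => apply iff_and; [iffs|iffs]
  | |- (_ \/ _) <-> (_ \/ _) => apply iff_or; [iffs|iffs]
  | |- (~ _) <-> (~ _) => apply iff_not; iffs
  | |- (forall i, i < ?N -> @?P i) <-> (forall i, i < ?N' -> @?Q i) =>
      apply (iff_all_lt N N' P Q); [leaf | let i := fresh "i" in let Hi := fresh "Hi" in intros i Hi; cbn beta; iffs]
  | |- (?A -> ?B) <-> (?A' -> ?B') => apply iff_imp; [iffs|iffs]
  | |- _ => leaf
  end.

Section LF.
Let tag := p1E (V 2).
Let arg := p2E (V 2).
Let arg1 := p2E (V 3).
Definition F0 := FAnd (FEq tag (K 0)) (FEq (V 4) (K 0)).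
Definition F1 := FAnd (FEq tag (K 1)) (FAnd (FNe (V 3) (K 0)) (FEq (V 4) (Pl (hdE (V 3)) (K 1)))).
Definition F2 := FAnd (FEq tag (K 2)) (FAnd (FT (itE arg (V 3))) (FEq (V 4) (nthE arg (V 3)))).
Definition F3 := FAnd (FEq tag (K 3)) (FAnd (laterE (V 0) (tripE (p1E arg) (V 5) (V 4)) (V 1))
   (FAnd (FAll (Pl (Pl (p2E arg) (V 5)) (K 1))
            (FAnd (FImpl (FT (itE (V 0) (p2E arg1))) (FT (itE (V 0) (V 6))))
                  (FImpl (FT (itE (V 0) (V 6))) (FT (itE (V 0) (p2E arg1))))))
         (FAll (Pl (p2E arg) (K 1)) (FImpl (FT (itE (V 0) (p2E arg1)))
            (laterE (V 1) (tripE (nthE (V 0) (p2E arg1)) (V 4) (nthE (V 0) (V 6))) (V 2)))))).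
Definition F4 := FAnd (FEq tag (K 4)) (FAnd (FNe (V 3) (K 0))
   (FOr (FAnd (FEq (hdE (V 3)) (K 0)) (laterE (V 0) (tripE (p1E arg) (tlE (V 3)) (V 4)) (V 1)))
        (FAnd (FNe (hdE (V 3)) (K 0))
           (FAnd (laterE (V 0) (tripE (V 2) (consE (Mi (hdE (V 3)) (K 1)) (tlE (V 3))) (V 5)) (V 1))
                 (laterE (V 0) (tripE (p2E arg) (consE (Mi (hdE (V 3)) (K 1)) (consE (V 5) (tlE (V 3)))) (V 4)) (V 1)))))).
Definition F5 := FAnd (FEq tag (K 5)) (FAnd (laterE (V 0) (tripE arg (consE (V 4) (V 3)) (K 0)) (V 1))
   (FAll (V 4) (laterNZE (V 1) (p2E (V 3)) (consE (V 0) (V 4)) (V 2)))).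
End LF.
Definition localF2 := FOr F0 (FOr F1 (FOr F2 (FOr F3 (FOr F4 F5)))).

Lemma sat_localF2 j d c v y aux :
  sat localF2 [j; d; c; v; y; aux] <-> locS' c v y aux (fun J => laterN j J d) (fun f v => laterNZN j f v d).
Proof.
  unfold localF2, F0, F1, F2, F3, F4, F5, locS', FNe. cbn [sat]. iffs.
Qed.

Definition ndE := nthE (V 0) (V 1).
Definition localF := callF localF2
  [V 0; V 1; p1E (p1E ndE); p1E (p2E (p1E ndE)); p2E (p2E (p1E ndE)); p2E ndE].
Lemma sat_localF j d : sat localF [j; d] <-> locN j d.
Proof.
  unfold localF. rewrite sat_callF. unfold ndE. cbn [map].
  repeat (rewrite ?den_p2E, ?den_p1E, ?den_nthE). cbn [den nth].
  rewrite sat_localF2. reflexivity.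
Qed.

Definition validF := FAnd (FNe (V 0) (K 0)) (FAll (V 0) (FImpl (FT (itE (V 0) (V 1))) (callF localF [V 0; V 1]))).
Definition validN d := d <> 0 /\ (forall j, j < d -> iterTl j d <> 0 -> locN j d).
Lemma sat_validF d : sat validF [d] <-> validN d.
Proof.
  unfold validF, validN, FNe. cbn [sat]. apply iff_and. cbn; reflexivity.
  apply iff_all_lt. reflexivity. intros i Hi. apply iff_imp. rewrite den_itE. reflexivity.
  rewrite sat_callF. cbn [map den nth]. apply sat_localF.
Qed.

Definition ChkF := FAnd (callF validF [V 0]) (FEq (p1E (hdE (V 0))) (tripE (V 1) (V 2) (V 3))).
Definition ChkN d c v y := validN d /\ p1 (hdN d) = trip c v y.
Lemma sat_ChkF d c v y : sat ChkF [d; c; v; y] <-> ChkN d c v y.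
Proof.
  unfold ChkF, ChkN. cbn [sat]. apply iff_and. rewrite sat_callF. apply sat_validF.
  rewrite den_p1E, den_hdE, den_tripE. reflexivity.
Qed.

Lemma laterN_clist j J L : laterN j J (clist L) <-> exists j', j < j' /\ j' < length L /\ p1 (nth j' L 0) = J.
Proof.
  unfold laterN. split.
  - intros (j' & _ & H1 & H2 & H3). rewrite iterTl_nz in H2. rewrite nthN_clist in H3 by auto. eauto.
  - intros (j' & H1 & H2 & H3). exists j'. pose proof (length_le_clist L).
    repeat split; try lia. rewrite iterTl_nz; auto. rewrite nthN_clist; auto.
Qed.
Lemma laterNZN_clist j f v L : laterNZN j f v (clist L) <-> exists j', j < j' /\ j' < length L /\
   p1 (p1 (nth j' L 0)) = f /\ p1 (p2 (p1 (nth j' L 0))) = v /\ p2 (p2 (p1 (nth j' L 0))) <> 0.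
Proof.
  unfold laterNZN. split.
  - intros (j' & _ & H1 & H2 & H3). rewrite iterTl_nz in H2. rewrite !nthN_clist in H3 by auto. eauto.
  - intros (j' & H1 & H2 & H3). exists j'. pose proof (length_le_clist L).
    repeat split; try lia. rewrite iterTl_nz; auto. rewrite nthN_clist; tauto. rewrite nthN_clist; tauto.
    rewrite nthN_clist; tauto.
Qed.

Definition latL L j J := exists j', j < j' /\ j' < length L /\ p1 (nth j' L 0) = J.
Definition latNZL L j f v := exists j', j < j' /\ j' < length L /\
   p1 (p1 (nth j' L 0)) = f /\ p1 (p2 (p1 (nth j' L 0))) = v /\ p2 (p2 (p1 (nth j' L 0))) <> 0.

Lemma locN_clist j L : j < length L ->
  (locN j (clist L) <-> let nd := nth j L 0 in
     locS' (p1 (p1 nd)) (p1 (p2 (p1 nd))) (p2 (p2 (p1 nd))) (p2 nd) (latL L j) (latNZL L j)).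
Proof.
  intros Hj. unfold locN. rewrite nthN_clist by auto. cbv zeta. split; apply locS'_mono;
  intros; try apply laterN_clist; try apply laterNZN_clist; auto;
  first [apply laterN_clist in H | apply laterNZN_clist in H]; auto.
Qed.

Lemma evalList_of_nth gs l ws : length gs = length ws ->
  (forall i, i < length gs -> eval (nth i gs PZero) l (nth i ws 0)) -> evalList gs l ws.
Proof.
  revert ws; induction gs; intros [|w ws] H1 H2; simpl in *; try lia. constructor.
  constructor. apply (H2 0). lia. apply IHgs. lia. intros i Hi. apply (H2 (S i)). lia.
Qed.

Lemma tag_ne a b x : a <> b -> p1 (pair a x) = b -> False.
Proof. rewrite p1_pair. auto. Qed.

Lemma sound_L L : (forall j, j < length L -> locN j (clist L)) ->
  forall j, j < length L -> forall t l, code t = p1 (p1 (nth j L 0)) -> clist l = p1 (p2 (p1 (nth j L 0))) ->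
    eval t l (p2 (p2 (p1 (nth j L 0)))).
Proof.
  intros HV.
  assert (forall k j, length L - j <= k -> j < length L -> forall t l, code t = p1 (p1 (nth j L 0)) -> clist l = p1 (p2 (p1 (nth j L 0))) ->
    eval t l (p2 (p2 (p1 (nth j L 0))))); [|intros; eapply H; eauto].
  induction k; intros j Hk Hj; [lia|].
  assert (IH: forall c v y, latL L j (trip c v y) -> forall t l, code t = c -> clist l = v -> eval t l y).
  { intros c v y (j' & H1 & H2 & H3) t l Ht Hl. unfold trip in H3.
    replace c with (p1 (p1 (nth j' L 0))) in Ht by (rewrite H3, p1_pair; auto).
    replace v with (p1 (p2 (p1 (nth j' L 0)))) in Hl by (rewrite H3, p2_pair, p1_pair; auto).
    replace y with (p2 (p2 (p1 (nth j' L 0)))) by (rewrite H3, !p2_pair; auto).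
    apply IHk; auto; lia. }
  assert (IHNZ: forall f v, latNZL L j f v -> forall t l, code t = f -> clist l = v -> exists w, eval t l (S w)).
  { intros f v (j' & H1 & H2 & H3 & H4 & H5) t l Ht Hl.
    destruct (p2 (p2 (p1 (nth j' L 0)))) eqn:E. congruence. exists n. rewrite <- E.
    apply IHk; auto; try lia; congruence. }
  pose proof (HV j Hj) as Hloc. rewrite locN_clist in Hloc by auto. cbv zeta in Hloc.
  revert Hloc IH IHNZ.
  generalize (p1 (p1 (nth j L 0))) (p1 (p2 (p1 (nth j L 0)))) (p2 (p2 (p1 (nth j L 0)))) (p2 (nth j L 0)).
  intros c v y aux Hloc IH IHNZ t l Ht Hl. subst c v.
  unfold locS' in Hloc.
  destruct t; cbn [code] in Hloc; rewrite ?p1_pair, ?p2_pair in Hloc.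
  -
    destruct Hloc as [[_ ->]|[[H _]|[[H _]|[[H _]|[[H _]|[H _]]]]]]; try discriminate. constructor.
  - destruct Hloc as [[H _]|[[_ [H1 ->]]|[[H _]|[[H _]|[[H _]|[H _]]]]]]; try discriminate.
    destruct l as [|x l]. simpl in H1; congruence. rewrite hdN_cons. rewrite Nat.add_1_r. constructor.
  - destruct Hloc as [[H _]|[[H _]|[[_ [H1 ->]]|[[H _]|[[H _]|[H _]]]]]]; try discriminate.
    rewrite iterTl_nz in H1. rewrite nthN_clist by auto. constructor. auto.
  -
    destruct Hloc as [[H _]|[[H _]|[[H _]|[[_ [H1 [H2 H3]]]|[[H _]|[H _]]]]]]; try discriminate.
    destruct (clist_surj aux) as [ws <-].
    assert (Hlen: length l0 = length ws).
    { pose proof (length_le_clist ws). pose proof (length_le_clist (map code l0)).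
      rewrite length_map in H0.
      destruct (Nat.lt_trichotomy (length l0) (length ws)) as [Hlt|[Heq|Hlt]]; auto; exfalso.
      - destruct (H2 (length l0)) as [_ Hb]. lia. rewrite iterTl_nz in Hb. specialize (Hb Hlt).
        rewrite iterTl_nz, length_map in Hb. lia.
      - destruct (H2 (length ws)) as [Hb _]. lia. rewrite iterTl_nz, length_map in Hb. specialize (Hb Hlt).
        rewrite iterTl_nz in Hb. lia. }
    rewrite p1_pair in H1.
    econstructor; [|apply (IH _ _ _ H1); reflexivity].
    apply evalList_of_nth; auto. intros i Hi.
    assert (Hi': i < clist (map code l0) + 1). { pose proof (length_le_clist (map code l0)). rewrite length_map in H. lia. }
    specialize (H3 i Hi'). rewrite iterTl_nz, length_map in H3. specialize (H3 Hi).
    rewrite !nthN_clist in H3 by (rewrite ?length_map; lia).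
    eapply IH. apply H3. rewrite (nth_indep _ 0 (code PZero)) by (rewrite length_map; auto).
    rewrite map_nth. reflexivity. reflexivity.
  -
    destruct Hloc as [[H _]|[[H _]|[[H _]|[[H _]|[[_ [H1 H2]]|[H _]]]]]]; try discriminate.
    destruct l as [|n l]. simpl in H1; congruence. rewrite hdN_cons, tlN_cons in H2.
    destruct H2 as [[-> H2]|[Hn [H2 H3]]].
    + constructor. rewrite p1_pair in H2. eapply IH; eauto.
    + destruct n. congruence. replace (S n - 1) with n in * by lia.
      rewrite consN_clist in H2. rewrite consN_clist, consN_clist in H3.
      eapply eRecS. eapply IH. apply H2. cbn [code]. reflexivity. reflexivity.
      eapply IH. apply H3. reflexivity. reflexivity.
  -
    destruct Hloc as [[H _]|[[H _]|[[H _]|[[H _]|[[H _]|[_ [H1 H2]]]]]]]; try discriminate.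
    rewrite consN_clist in H1. constructor. eapply IH; eauto.
    intros z Hz. specialize (H2 z Hz). rewrite consN_clist in H2. eapply IHNZ; eauto.
Qed.

Definition Der (d c v y : nat) : Prop := ChkN d c v y.

Lemma sound d t l y : ChkN d (code t) (clist l) y -> eval t l y.
Proof.
  intros [[Hd HV] Hr]. destruct (clist_surj d) as [L <-].
  destruct L as [|r L]. simpl in Hd; congruence.
  assert (HV': forall j, j < length (r :: L) -> locN j (clist (r :: L))).
  { intros j Hj. apply HV. pose proof (length_le_clist (r::L)); lia. rewrite iterTl_nz; auto. }
  pose proof (sound_L _ HV' 0 ltac:(simpl; lia) t l) as H.
  rewrite hdN_cons in Hr. cbn [nth] in H. rewrite Hr in H. unfold trip in H.
  rewrite ?p1_pair, ?p2_pair, ?p1_pair in H. apply H; auto.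
Qed.

Section EI.
Variable P : PR -> list nat -> nat -> Prop.
Variable Q : list PR -> list nat -> list nat -> Prop.
Hypothesis hZ : forall v, P PZero v 0.
Hypothesis hS : forall x v, P PSucc (x::v) (S x).
Hypothesis hP : forall i v, i < length v -> P (PProj i) v (nth i v 0).
Hypothesis hC : forall f gs v ws y, evalList gs v ws -> Q gs v ws -> eval f ws y -> P f ws y -> P (PComp f gs) v y.
Hypothesis hR0 : forall f g v y, eval f v y -> P f v y -> P (PRec f g) (0::v) y.
Hypothesis hRS : forall f g n v r y, eval (PRec f g) (n::v) r -> P (PRec f g) (n::v) r ->
  eval g (n::r::v) y -> P g (n::r::v) y -> P (PRec f g) (S n :: v) y.
Hypothesis hM : forall f v y, eval f (y::v) 0 -> P f (y::v) 0 ->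
  (forall z, z < y -> exists w, eval f (z::v) (S w) /\ P f (z::v) (S w)) -> P (PMu f) v y.
Hypothesis hLn : forall v, Q [] v [].
Hypothesis hLc : forall g gs v w ws, eval g v w -> P g v w -> evalList gs v ws -> Q gs v ws -> Q (g::gs) v (w::ws).

Fixpoint eval_ind2 c v y (H : eval c v y) {struct H} : P c v y :=
  match H in eval c v y return P c v y with
  | eZero v => hZ v
  | eSucc x v => hS x v
  | eProj i v Hi => hP i v Hi
  | eComp f gs v ws y HL Hf => hC f gs v ws y HL (evalList_ind2 gs v ws HL) Hf (eval_ind2 f ws y Hf)
  | eRec0 f g v y Hf => hR0 f g v y Hf (eval_ind2 _ _ _ Hf)
  | eRecS f g n v r y H1 H2 => hRS f g n v r y H1 (eval_ind2 _ _ _ H1) H2 (eval_ind2 _ _ _ H2)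
  | eMu f v y H0 H1 => hM f v y H0 (eval_ind2 _ _ _ H0)
      (fun z Hz => match H1 z Hz with ex_intro _ w Hw => ex_intro _ w (conj Hw (eval_ind2 _ _ _ Hw)) end)
  end
with evalList_ind2 gs v ws (H : evalList gs v ws) {struct H} : Q gs v ws :=
  match H in evalList gs v ws return Q gs v ws with
  | eLnil v => hLn v
  | eLcons g gs v w ws Hg Hgs => hLc g gs v w ws Hg (eval_ind2 _ _ _ Hg) Hgs (evalList_ind2 _ _ _ Hgs)
  end.
End EI.

Ltac pp := repeat (rewrite ?p1_pair, ?p2_pair).

Definition validL L := forall j, j < length L -> locN j (clist L).
Definition occ A J := exists j', j' < length A /\ p1 (nth j' A 0) = J.
Definition occNZ A f v := exists j', j' < length A /\
   p1 (p1 (nth j' A 0)) = f /\ p1 (p2 (p1 (nth j' A 0))) = v /\ p2 (p2 (p1 (nth j' A 0))) <> 0.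

Lemma occ_app_l A B J : occ A J -> occ (A ++ B) J.
Proof. intros (j & H1 & H2). exists j. rewrite length_app, app_nth1; auto; split; auto; lia. Qed.
Lemma occ_app_r A B J : occ B J -> occ (A ++ B) J.
Proof. intros (j & H1 & H2). exists (length A + j). rewrite length_app, app_nth2_plus; auto; split; auto; lia. Qed.
Lemma occNZ_app_l A B f v : occNZ A f v -> occNZ (A ++ B) f v.
Proof. intros (j & H1 & H2). exists j. rewrite length_app, app_nth1; auto; split; auto; lia. Qed.
Lemma occNZ_app_r A B f v : occNZ B f v -> occNZ (A ++ B) f v.
Proof. intros (j & H1 & H2). exists (length A + j). rewrite length_app, app_nth2_plus; auto; split; auto; lia. Qed.

Lemma validL_app L1 L2 : validL L1 -> validL L2 -> validL (L1 ++ L2).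
Proof.
  intros H1 H2 j Hj. rewrite length_app in Hj. rewrite locN_clist by (rewrite length_app; auto). cbv zeta.
  destruct (Nat.lt_ge_cases j (length L1)).
  - pose proof (H1 j H) as Hl. rewrite locN_clist in Hl by auto. cbv zeta in Hl.
    rewrite app_nth1 by auto. revert Hl. apply locS'_mono.
    + intros J (j' & ? & ? & ?). exists j'. rewrite length_app, app_nth1 by auto. repeat split; auto; lia.
    + intros f v (j' & ? & ? & ?). exists j'. rewrite length_app, app_nth1 by auto. repeat split; auto; lia.
  - destruct (Nat.le_exists_sub _ _ H) as (j0 & -> & _).
    pose proof (H2 j0 ltac:(lia)) as Hl. rewrite locN_clist in Hl by lia. cbv zeta in Hl.
    rewrite Nat.add_comm, app_nth2_plus. revert Hl. apply locS'_mono.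
    + intros J (j' & ? & ? & ?). exists (length L1 + j'). rewrite length_app, app_nth2_plus. repeat split; auto; lia.
    + intros f v (j' & ? & ? & ?). exists (length L1 + j'). rewrite length_app, app_nth2_plus. repeat split; auto; lia.
Qed.

Lemma validL_cons r L : validL L ->
  locS' (p1 (p1 r)) (p1 (p2 (p1 r))) (p2 (p2 (p1 r))) (p2 r) (occ L) (occNZ L) -> validL (r :: L).
Proof.
  intros HV Hr j Hj. rewrite locN_clist by auto. cbv zeta. destruct j as [|j0].
  - cbn [nth]. revert Hr. apply locS'_mono.
    + intros J (j' & ? & ?). exists (S j'). simpl. repeat split; auto; lia.
    + intros f v (j' & ? & ?). exists (S j'). simpl. repeat split; auto; lia.
  - cbn [nth]. simpl in Hj. pose proof (HV j0 ltac:(lia)) as Hl. rewrite locN_clist in Hl by lia.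
    revert Hl. apply locS'_mono.
    + intros J (j' & ? & ? & ?). exists (S j'). simpl. repeat split; auto; lia.
    + intros f v (j' & ? & ? & ?). exists (S j'). simpl. repeat split; auto; lia.
Qed.

Definition mk c v y aux := pair (trip c v y) aux.
Lemma mk_f c v y aux : p1 (p1 (mk c v y aux)) = c /\ p1 (p2 (p1 (mk c v y aux))) = v /\
   p2 (p2 (p1 (mk c v y aux))) = y /\ p2 (mk c v y aux) = aux.
Proof. unfold mk, trip. repeat (rewrite ?p1_pair, ?p2_pair). auto. Qed.

Lemma evalList_len gs v ws : evalList gs v ws -> length gs = length ws.
Proof. induction 1; simpl; auto. Qed.

Lemma root_occ c v y L : L <> [] -> p1 (nth 0 L 0) = trip c v y -> occ L (trip c v y).
Proof. intros H1 H2. exists 0. destruct L; simpl in *; try congruence. split; auto; lia. Qed.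

Lemma complete_gen :
  (forall t l y, eval t l y -> exists L, validL L /\ L <> [] /\ p1 (nth 0 L 0) = trip (code t) (clist l) y).
Proof.
  apply (eval_ind2
    (fun t l y => exists L, validL L /\ L <> [] /\ p1 (nth 0 L 0) = trip (code t) (clist l) y)
    (fun gs l ws => exists L, validL L /\ forall i, i < length gs -> occ L (trip (code (nth i gs PZero)) (clist l) (nth i ws 0)))).
  -
    intros v. exists [mk (code PZero) (clist v) 0 0]. split; [|split; [congruence|]].
    + apply validL_cons. intros j Hj; simpl in Hj; lia. destruct (mk_f (code PZero) (clist v) 0 0) as (-> & -> & -> & ->).
      left. cbn [code]. rewrite p1_pair. auto.
    + simpl. unfold mk. apply p1_pair.
  - intros x v. exists [mk (code PSucc) (clist (x::v)) (S x) 0]. split; [|split; [congruence|]].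
    + apply validL_cons. intros j Hj; simpl in Hj; lia. destruct (mk_f (code PSucc) (clist (x::v)) (S x) 0) as (-> & -> & -> & ->).
      right; left. cbn [code]. rewrite p1_pair, hdN_cons. simpl. lia.
    + simpl. unfold mk. apply p1_pair.
  - intros i v Hi. exists [mk (code (PProj i)) (clist v) (nth i v 0) 0]. split; [|split; [congruence|]].
    + apply validL_cons. intros j Hj; simpl in Hj; lia. destruct (mk_f (code (PProj i)) (clist v) (nth i v 0) 0) as (-> & -> & -> & ->).
      right; right; left. cbn [code]. rewrite p1_pair, p2_pair, iterTl_nz, nthN_clist; auto.
    + simpl. unfold mk. apply p1_pair.
  -
    intros f gs v ws y HL [L1 [HV1 Hocc]] Hf [L2 [HV2 [Hne Hr]]].
    exists (mk (code (PComp f gs)) (clist v) y (clist ws) :: L2 ++ L1). split; [|split; [congruence|]].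
    + apply validL_cons. apply validL_app; auto. destruct (mk_f (code (PComp f gs)) (clist v) y (clist ws)) as (-> & -> & -> & ->).
      right; right; right; left. cbn [code]. pp.
      pose proof (evalList_len _ _ _ HL) as Hlen.
      split; auto. split. apply occ_app_l. apply root_occ; auto.
      split.
      * intros i _. rewrite !iterTl_nz, length_map. lia.
      * intros i _ Hi. rewrite iterTl_nz, length_map in Hi. rewrite !nthN_clist by (rewrite ?length_map; lia).
        apply occ_app_r. rewrite (nth_indep _ 0 (code PZero)) by (rewrite length_map; auto).
        rewrite map_nth. apply Hocc; auto.
    + simpl. unfold mk. apply p1_pair.
  -
    intros f g v y Hf [L1 [HV1 [Hne Hr]]].
    exists (mk (code (PRec f g)) (clist (0::v)) y 0 :: L1). split; [|split; [congruence|]].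
    + apply validL_cons; auto. destruct (mk_f (code (PRec f g)) (clist (0::v)) y 0) as (-> & -> & -> & ->).
      right; right; right; right; left. cbn [code]. pp; rewrite hdN_cons, tlN_cons.
      split; auto. split. simpl; congruence. left. split; auto. apply root_occ; auto.
    + simpl. unfold mk. apply p1_pair.
  -
    intros f g n v r y H1 [L1 [HV1 [Hne1 Hr1]]] H2 [L2 [HV2 [Hne2 Hr2]]].
    exists (mk (code (PRec f g)) (clist (S n::v)) y r :: L1 ++ L2). split; [|split; [congruence|]].
    + apply validL_cons. apply validL_app; auto. destruct (mk_f (code (PRec f g)) (clist (S n::v)) y r) as (-> & -> & -> & ->).
      right; right; right; right; left. cbn [code]. pp; rewrite hdN_cons, tlN_cons.
      split; auto. split. simpl; congruence. right. split; auto. replace (S n - 1) with n by lia.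
      rewrite !consN_clist. split. apply occ_app_l. apply root_occ; auto.
      apply occ_app_r. apply root_occ; auto.
    + simpl. unfold mk. apply p1_pair.
  -
    intros f v y H0 [L0 [HV0 [Hne0 Hr0]]] Hz.
    assert (HA: forall y', y' <= y -> exists L, validL L /\ forall z, z < y' -> occNZ L (code f) (clist (z :: v))).
    { induction y'; intros Hy'. exists []. split. intros j Hj; simpl in Hj; lia. intros; lia.
      destruct IHy' as [LA [HVA HoA]]. lia.
      destruct (Hz y' ltac:(lia)) as (w & _ & LB & HVB & HneB & HrB).
      exists (LA ++ LB). split. apply validL_app; auto. intros z Hzl.
      destruct (Nat.eq_dec z y').
      - subst. apply occNZ_app_r. exists 0. destruct LB; [congruence|]. simpl in *. rewrite HrB. unfold trip.
        pp. repeat split; auto; lia.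
      - apply occNZ_app_l. apply HoA. lia. }
    destruct (HA y ltac:(lia)) as [LA [HVA HoA]].
    exists (mk (code (PMu f)) (clist v) y 0 :: L0 ++ LA). split; [|split; [congruence|]].
    + apply validL_cons. apply validL_app; auto. destruct (mk_f (code (PMu f)) (clist v) y 0) as (-> & -> & -> & ->).
      right; right; right; right; right. cbn [code]. pp.
      split; auto. split. rewrite consN_clist. apply occ_app_l. apply root_occ; auto.
      intros z Hzy. rewrite consN_clist. apply occNZ_app_r. auto.
    + simpl. unfold mk. apply p1_pair.
  - intros v. exists []. split. intros j Hj; simpl in Hj; lia. intros i Hi; simpl in Hi; lia.
  - intros g gs v w ws Hg [L1 [HV1 [Hne1 Hr1]]] Hgs [L2 [HV2 Hocc]].
    exists (L1 ++ L2). split. apply validL_app; auto.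
    intros [|i] Hi; simpl. apply occ_app_l. apply root_occ; auto.
    apply occ_app_r. apply Hocc. simpl in Hi; lia.
Qed.

Lemma complete t l y : eval t l y -> exists d, ChkN d (code t) (clist l) y.
Proof.
  intros H. destruct (complete_gen t l y H) as (L & HV & Hne & Hr).
  exists (clist L). split.
  - split. rewrite clist_0; auto. intros j _ Hj. apply HV. apply iterTl_nz; auto.
  - destruct L; [congruence|]. rewrite hdN_cons. exact Hr.
Qed.

Lemma eval_det : forall c v y, eval c v y -> forall y', eval c v y' -> y = y'.
Proof.
  apply (eval_ind2 (fun c v y => forall y', eval c v y' -> y = y')
                   (fun gs v ws => forall ws', evalList gs v ws' -> ws = ws')).
  - intros v y' H; inversion H; auto.
  - intros x v y' H; inversion H; auto.
  - intros i v _ y' H; inversion H; auto.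
  - intros f gs v ws y _ IHl _ IHf y' H. inversion H; subst.
    match goal with Hl: evalList gs v ?ws' |- _ => apply IHl in Hl end. subst. auto.
  - intros f g v y _ IH y' H. inversion H; subst. auto.
  - intros f g n v r y _ IH1 _ IH2 y' H. inversion H; subst.
    match goal with Hl: eval (PRec f g) (n :: v) ?r' |- _ => apply IH1 in Hl end. subst. auto.
  - intros f v y _ IH0 Hz y' H. inversion H; subst.
    destruct (Nat.lt_trichotomy y y') as [Hl|[Hl|Hl]]; auto; exfalso.
    + match goal with H3: forall z, z < y' -> _ |- _ => destruct (H3 y Hl) as [w Hw] end. apply IH0 in Hw. discriminate.
    + destruct (Hz y' Hl) as (w & _ & Hw).
      match goal with H2: eval f (y' :: v) 0 |- _ => apply Hw in H2 end. discriminate.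
  - intros v ws' H; inversion H; auto.
  - intros g gs v w ws _ IHg _ IHgs ws' H. inversion H; subst. f_equal; auto.
Qed.

Fixpoint M (m : nat) (Q : list nat -> Prop) (v : list nat) : Prop :=
  match m with 0 => Q v | S m' => exists y, ~ M m' Q (y :: v) end.

Lemma M_cong m : forall Q1 Q2 a b, (forall ys, length ys = m -> (Q1 (ys ++ a) <-> Q2 (ys ++ b))) ->
  (M m Q1 a <-> M m Q2 b).
Proof.
  induction m; intros Q1 Q2 a b H; simpl.
  - apply (H []). reflexivity.
  - apply ex_iff. intros y. apply iff_not. apply IHm. intros ys Hys.
    specialize (H (ys ++ [y])). rewrite <- !app_assoc in H. apply H. rewrite length_app; simpl; lia.
Qed.

Lemma M_const m : forall Q a (P : Prop), (forall ys, length ys = m -> (Q (ys ++ a) <-> P)) ->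
  (M m Q a <-> (if Nat.even m then P else ~ P)).
Proof.
  induction m; intros Q a P H; cbn [M].
  - apply (H []). reflexivity.
  - assert (forall y, M m Q (y :: a) <-> (if Nat.even m then P else ~P)).
    { intros y. apply IHm. intros ys Hys. specialize (H (ys ++ [y])). rewrite <- app_assoc in H. apply H.
      rewrite length_app; simpl; lia. }
    rewrite Nat.even_succ, <- Nat.negb_even. destruct (Nat.even m); simpl.
    + split. intros [y Hy]. rewrite H0 in Hy. auto. intros Hp. exists 0. rewrite H0. auto.
    + split. intros [y Hy]. rewrite H0 in Hy. tauto. intros Hp. exists 0. rewrite H0. tauto.
Qed.

Lemma M_split m : forall Q v, M (S m) Q v <-> M m (M 1 Q) v.
Proof.
  induction m; intros Q v. simpl. reflexivity.
  change (M (S (S m)) Q v) with (exists y, ~ M (S m) Q (y :: v)).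
  change (M (S m) (M 1 Q) v) with (exists y, ~ M m (M 1 Q) (y :: v)).
  apply ex_iff; intro y. apply iff_not. apply IHm.
Qed.

Lemma Sigma_ext n : forall k (R R' : list nat -> Prop), (forall v, length v = k -> (R v <-> R' v)) ->
  Sigma n k R -> Sigma n k R'.
Proof.
  destruct n; intros k R R' H; simpl.
  - intros (c & Hc). exists c. intros v Hv. specialize (Hc v Hv). rewrite <- H by auto. auto.
  - intros (T & HT & H2). exists T. split; auto. intros v Hv. rewrite <- H by auto. auto.
Qed.

Lemma Sigma_of_M m : forall k Q, computable_rel (m + k) Q -> Sigma m k (M m Q).
Proof.
  induction m; intros k Q HQ; simpl.
  - exact HQ.
  - exists (fun w => ~ M m Q w). split.
    + apply (Sigma_ext m (S k) (M m Q)). intros v _. split; intros H. auto. apply NNPP; auto.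
      apply IHm. replace (m + S k) with (S (m + k)) by lia. exact HQ.
    + intros v _. reflexivity.
Qed.

Lemma M_of_Sigma m : forall k R, Sigma m k R ->
  exists Q, computable_rel (m + k) Q /\ forall v, length v = k -> (R v <-> M m Q v).
Proof.
  induction m; intros k R HS; simpl in *.
  - exists R. split; auto. reflexivity.
  - destruct HS as (T & HT & HR). destruct (IHm (S k) _ HT) as (Q & HQ & HQe).
    exists Q. split. replace (S (m + k)) with (m + S k) by lia. exact HQ.
    intros v Hv. rewrite HR by auto. apply ex_iff. intros y. rewrite <- HQe by (simpl; lia).
    split; intros H. intro H'; auto. apply NNPP; auto.
Qed.

Lemma fm_comp k f : computable_rel k (sat f).
Proof.
  exists (comp k (toB f)). intros v Hv. split; intros H.
  - rewrite <- (toB_1 f v H). apply comp_ok; auto.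
  - rewrite <- (toB_0 f v H). apply comp_ok; auto.
Qed.

Lemma computable_ext k R R' : (forall v, length v = k -> (R v <-> R' v)) -> computable_rel k R -> computable_rel k R'.
Proof. apply (Sigma_ext 0). Qed.

Lemma map_nth_seq l s n : s + n <= length l -> map (fun i => nth i l 0) (seq s n) = firstn n (skipn s l).
Proof.
  revert s l. induction n; intros s l H; simpl. reflexivity.
  assert (Hs: skipn s l = nth s l 0 :: skipn (S s) l).
  { clear -H. revert l H. induction s; intros [|x l] H; simpl in *; try lia; auto. apply IHs. lia. }
  rewrite Hs. simpl. f_equal. apply IHn. lia.
Qed.

Lemma den_vars s n env : s + n <= length env -> map (fun a => den a env) (map V (seq s n)) = firstn n (skipn s env).
Proof. intros H. rewrite map_map. cbn [den]. apply map_nth_seq. auto. Qed.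

Fixpoint clistE (l : list ex) : ex := match l with [] => K 0 | a :: l' => consE a (clistE l') end.
Lemma den_clistE l env : den (clistE l) env = clist (map (fun a => den a env) l).
Proof. induction l; simpl; auto. rewrite den_consE, IHl. reflexivity. Qed.

Definition Dfm N := FNot (callF ChkF [p2E (V 0); V (N-1); clistE (p1E (V 0) :: map V (seq 1 (N-2))); K 0]).

Lemma Dfm_spec N z u' e : length u' = N - 2 -> 2 <= N ->
  (sat (Dfm N) (z :: u' ++ [e]) <-> ~ ChkN (p2 z) e (clist (p1 z :: u')) 0).
Proof.
  intros H1 H2. unfold Dfm. cbn [sat]. rewrite sat_callF. cbn [map]. rewrite sat_ChkF.
  rewrite den_p2E, den_clistE. cbn [map]. rewrite den_p1E. rewrite den_vars by (simpl; rewrite length_app; simpl; lia).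
  cbn [den]. replace (N - 1) with (S (length u')) by lia. cbn [nth skipn].
  rewrite app_nth2, Nat.sub_diag by lia. cbn [nth]. rewrite <- H1.
  rewrite firstn_app, firstn_all, Nat.sub_diag, firstn_O, app_nil_r. reflexivity.
Qed.

Lemma univ_core N c B : 2 <= N ->
  (forall v, length v = N - 1 -> (B v -> eval c v 1) /\ (~ B v -> eval c v 0)) ->
  forall u', length u' = N - 2 ->
  ((exists z, ~ sat (Dfm N) (z :: u' ++ [code c])) <-> (exists z, ~ B (z :: u'))).
Proof.
  intros HN HB u' Hu. split.
  - intros [z Hz]. rewrite Dfm_spec in Hz by auto. apply NNPP in Hz. apply sound in Hz.
    exists (p1 z). intros Hb. apply HB in Hb; [|simpl; lia]. pose proof (eval_det _ _ _ Hz _ Hb). discriminate.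
  - intros [z Hz]. apply HB in Hz; [|simpl; lia]. destruct (complete _ _ _ Hz) as [d Hd].
    exists (pair z d). rewrite Dfm_spec by auto. rewrite p1_pair, p2_pair. tauto.
Qed.

Lemma W_univ m c B :
  (forall v, length v = m + 3 -> (B v -> eval c v 1) /\ (~ B v -> eval c v 0)) ->
  forall x y, M (S m) B [x;y] <-> M (S m) (sat (Dfm (m+4))) [x;y;code c].
Proof.
  intros HB x y. rewrite !M_split. apply M_cong. intros ys Hys. cbn [M].
  replace (ys ++ [x; y; code c]) with ((ys ++ [x;y]) ++ [code c]) by (rewrite <- app_assoc; reflexivity).
  symmetry. apply (univ_core (m+4)). lia. intros v Hv. apply HB. lia. rewrite length_app; simpl; lia.
Qed.

Lemma nth_mid (ys v : list nat) p : nth (length ys) (ys ++ p :: v) 0 = p.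
Proof. rewrite app_nth2, Nat.sub_diag by lia. reflexivity. Qed.

Lemma Mbex m k (Df : fm) (A : fm) (N : ex) (C : fm) (args : list ex) :
  exists Q, computable_rel (m + k) Q /\ forall v, length v = k ->
   (M m Q v <-> sat A v \/ exists j, j < den N v /\ sat C (j :: v) /\
        M m (sat Df) (map (fun a => den a (j::v)) args)).
Proof.
  destruct m as [|m'].
  - exists (sat (FOr A (FEx N (FAnd C (callF Df args))))). split. apply fm_comp.
    intros v Hv. cbn [M sat]. apply iff_or. reflexivity. apply ex_iff. intros j. rewrite sat_callF. reflexivity.
  - set (vvars := map V (seq (S m') k)).
    set (pv := V m').
    set (Ac := callF A vvars).
    set (Nc := Cl N vvars).
    set (Cc := callF C (p1E pv :: vvars)).
    set (guard := FAnd (FNot Ac) (FAnd (FLt (p1E pv) Nc) Cc)).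
    set (Dc := callF Df (map V (seq 0 m') ++ p2E pv :: map (fun a => Cl a (p1E pv :: vvars)) args)).
    set (Kt := FEq (K 0) (K 0)). set (Kf := FEq (K 0) (K 1)).
    set (Kpass := if Nat.even m' then Kt else Kf). set (Kfail := if Nat.even m' then Kf else Kt).
    set (Qf := FOr (FAnd guard Dc) (FAnd (FNot guard) (FOr (FAnd (FNot Ac) Kpass) (FAnd Ac Kfail)))).
    exists (sat Qf). split. apply fm_comp.
    intros v Hv.
    assert (Henv: forall ys p, length ys = m' ->
      map (fun a => den a (ys ++ p :: v)) vvars = v /\ den pv (ys ++ p :: v) = p /\
      map (fun a => den a (ys ++ p :: v)) (map V (seq 0 m')) = ys).
    { intros ys p Hys. unfold vvars, pv. rewrite !den_vars by (rewrite length_app; simpl; lia).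
      cbn [den]. rewrite <- Hys, nth_mid. split; [|split; auto].
      - replace (S (length ys)) with (length (ys ++ [p])) by (rewrite length_app; simpl; lia).
        replace (ys ++ p :: v) with ((ys ++ [p]) ++ v) by (rewrite <- app_assoc; reflexivity).
        rewrite skipn_app, skipn_all, Nat.sub_diag. simpl. rewrite <- Hv. apply firstn_all.
      - rewrite skipn_O, firstn_app, firstn_all, Nat.sub_diag. simpl. apply app_nil_r. }
    assert (Hsat: forall ys p, length ys = m' -> (sat Qf (ys ++ p :: v) <->
       ((~ sat A v /\ p1 p < den N v /\ sat C (p1 p :: v)) /\
          sat Df (ys ++ p2 p :: map (fun a => den a (p1 p :: v)) args)) \/
       (~ (~ sat A v /\ p1 p < den N v /\ sat C (p1 p :: v)) /\
          ((~ sat A v /\ sat Kpass nil) \/ (sat A v /\ sat Kfail nil))))).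
    { intros ys p Hys. destruct (Henv ys p Hys) as (E1 & E2 & E3).
      unfold Qf, guard, Dc, Ac, Nc, Cc. cbn [sat]. rewrite !sat_callF. cbn [map den].
      rewrite E1. rewrite den_p1E, E2. rewrite map_app. rewrite E3. cbn [map].
      rewrite den_p2E, E2. rewrite map_map. cbn [den map]. rewrite den_p1E, E2, E1.
      unfold Kpass, Kfail, Kt, Kf. destruct (Nat.even m'); cbn [sat den]; reflexivity. }
    assert (Hinner: forall p, M m' (sat Qf) (p :: v) <->
       (~ sat A v /\ (p1 p < den N v /\ sat C (p1 p :: v) ->
          M m' (sat Df) (p2 p :: map (fun a => den a (p1 p :: v)) args)))).
    { intros p. destruct (classic (sat A v)) as [HA|HA].
      - rewrite (M_const m' _ _ (if Nat.even m' then False else True)).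
        + destruct (Nat.even m'); tauto.
        + intros ys Hys. rewrite Hsat by auto. unfold Kpass, Kfail, Kt, Kf.
          destruct (Nat.even m'); cbn [sat den]; split; intros; intuition congruence.
      - destruct (classic (p1 p < den N v /\ sat C (p1 p :: v))) as [Hg|Hg].
        + rewrite (M_cong m' _ (sat Df) _ (p2 p :: map (fun a => den a (p1 p :: v)) args)). tauto.
          intros ys Hys. rewrite Hsat by auto. tauto.
        + rewrite (M_const m' _ _ (if Nat.even m' then True else False)).
          * destruct (Nat.even m'); tauto.
          * intros ys Hys. rewrite Hsat by auto. unfold Kpass, Kfail, Kt, Kf.
            destruct (Nat.even m'); cbn [sat den]; split; intros; intuition congruence. }
    change (M (S m') (sat Qf) v) with (exists p, ~ M m' (sat Qf) (p :: v)).
    setoid_rewrite Hinner. split.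
    + intros [p Hp]. destruct (classic (sat A v)) as [HA|HA]. left; auto. right.
      exists (p1 p). apply not_and_or in Hp. destruct Hp as [Hp|Hp]. tauto.
      apply imply_to_and in Hp. destruct Hp as [[H1 H2] H3]. split; auto. split; auto.
      exists (p2 p). auto.
    + intros [HA|(j & H1 & H2 & [z Hz])].
      * exists 0. tauto.
      * exists (pair j z). rewrite p1_pair, p2_pair. tauto.
Qed.

Definition dec s := decf s s.
Lemma clist_dec s : clist (dec s) = s.
Proof. apply decf_ok. auto. Qed.
Lemma dec_clist L : dec (clist L) = L.
Proof. apply clist_inj. apply clist_dec. Qed.

Definition src tr := p1 (p2 tr).
Definition dst tr := p2 (p2 tr).
Fixpoint walkT (a : nat) (L : list nat) (b : nat) : Prop :=
  match L with
  | [] => a = b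
  | tr :: L' => (a = src tr /\ walkT (dst tr) L' b) \/ (a = dst tr /\ walkT (src tr) L' b)
  end.

Lemma walkT_app a L1 L2 c : walkT a (L1 ++ L2) c <-> exists b, walkT a L1 b /\ walkT b L2 c.
Proof.
  revert a; induction L1; intros a0; simpl.
  - split. intros H; exists a0; auto. intros (b & -> & H); auto.
  - rewrite !IHL1. split.
    + intros [(-> & b & H1 & H2)|(-> & b & H1 & H2)]; exists b; auto.
    + intros (b & [(-> & H1)|(-> & H1)] & H2); [left|right]; split; eauto.
Qed.

Lemma walkT_rev a L b : walkT a L b -> walkT b (rev L) a.
Proof.
  revert a; induction L; intros a0 H; simpl in *. auto.
  apply walkT_app. destruct H as [(-> & H)|(-> & H)].
  - exists (dst a). split. auto. simpl. right. auto.
  - exists (src a). split. auto. simpl. left. auto.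
Qed.

Section G.
Variable m : nat.
Definition Dm := sat (Dfm (m + 4)).
Definition Ptrip (e tr : nat) : Prop := ~ M m Dm [p1 tr; src tr; dst tr; e].

Definition eOf t := p1 t.
Definition aOf t := p1 (p2 t).
Definition bOf t := p1 (p2 (p2 t)).
Definition sOf t := p2 (p2 (p2 t)).
Definition vtx e a b s := 4 + pair e (pair a (pair b s)).
Lemma vtx_f e a b s : eOf (vtx e a b s - 4) = e /\ aOf (vtx e a b s - 4) = a /\ bOf (vtx e a b s - 4) = b /\ sOf (vtx e a b s - 4) = s.
Proof. unfold vtx, eOf, aOf, bOf, sOf. replace (4 + _ - 4) with (pair e (pair a (pair b s))) by lia.
  repeat (rewrite ?p1_pair, ?p2_pair). auto. Qed.
Lemma vtx_inj e a b s e' a' b' s' : vtx e a b s = vtx e' a' b' s' -> e = e' /\ a = a' /\ b = b' /\ s = s'.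
Proof. intros H. unfold vtx in H. assert (H': pair e (pair a (pair b s)) = pair e' (pair a' (pair b' s'))) by lia.
  apply pair_inj in H' as [? H']. apply pair_inj in H' as [? H']. apply pair_inj in H' as [? H']. auto. Qed.
Lemma vtx_eta u : 4 <= u -> u = vtx (eOf (u-4)) (aOf (u-4)) (bOf (u-4)) (sOf (u-4)).
Proof. intros H. unfold vtx, eOf, aOf, bOf, sOf. rewrite !pair_p. lia. Qed.

Definition cvL t := walkT (aOf t) (dec (sOf t)) (bOf t) /\ Forall (Ptrip (eOf t)) (dec (sOf t)).
Definition cv u := 4 <= u /\ cvL (u - 4).
Definition gE u u' := (u = 0 /\ u' = 1) \/ (u = 1 /\ u' = 0) \/ (u = 1 /\ u' = 2) \/ (u = 2 /\ u' = 1) \/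
                      (u = 2 /\ u' = 3) \/ (u = 3 /\ u' = 2).
Definition ov t t' := aOf t = aOf t' \/ aOf t = bOf t' \/ bOf t = aOf t' \/ bOf t = bOf t'.
Definition Gr u u' := gE u u' \/ (u <> u' /\ cv u /\ cv u' /\ eOf (u-4) = eOf (u'-4) /\ ov (u-4) (u'-4)).
Definition Rel e a b := exists L, walkT a L b /\ Forall (Ptrip e) L.
Definition Ecl u u' := u = u' \/ (u < 4 /\ u' < 4) \/
   (cv u /\ cv u' /\ eOf (u-4) = eOf (u'-4) /\ Rel (eOf (u-4)) (aOf (u-4)) (aOf (u'-4))).

Lemma Rel_refl e a : Rel e a a.
Proof. exists []. simpl. auto. Qed.
Lemma Rel_sym e a b : Rel e a b -> Rel e b a.
Proof. intros (L & H1 & H2). exists (rev L). split. apply walkT_rev; auto.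
  apply Forall_forall. intros x Hx. apply in_rev in Hx. rewrite Forall_forall in H2. auto. Qed.
Lemma Rel_trans e a b c : Rel e a b -> Rel e b c -> Rel e a c.
Proof. intros (L1 & H1 & H2) (L2 & H3 & H4). exists (L1 ++ L2). split. apply walkT_app. eauto.
  apply Forall_app. auto. Qed.
Lemma cv_Rel u : cv u -> Rel (eOf (u-4)) (aOf (u-4)) (bOf (u-4)).
Proof. intros [_ [H1 H2]]. exists (dec (sOf (u-4))). auto. Qed.

Lemma Gr_sym u u' : Gr u u' -> Gr u' u.
Proof. unfold Gr, gE, ov. intros [H|(H1 & H2 & H3 & H4 & H5)]. left; lia. right.
  split; [congruence|]. split; auto. split; auto. split; [congruence|].
  destruct H5 as [?|[?|[?|?]]]; [left|right;right;left|right;left|right;right;right]; congruence. Qed.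
Lemma Gr_irr u : ~ Gr u u.
Proof. unfold Gr, gE. intros [H|H]. lia. tauto. Qed.

Lemma Ecl_sym u u' : Ecl u u' -> Ecl u' u.
Proof. unfold Ecl. intros [H|[H|(H1&H2&H3&H4)]]. auto. right; left; lia. right; right.
  split; auto. split; auto. split; [congruence|]. rewrite <- H3. apply Rel_sym. auto. Qed.
Lemma Ecl_trans u v w : Ecl u v -> Ecl v w -> Ecl u w.
Proof.
  unfold Ecl. intros A B.
  destruct A as [->|[HA|(H1&H2&H3&H4)]]; auto.
  - destruct B as [<-|[HB|(H1'&H2'&H3'&H4')]].
    + right; left; auto.
    + right; left; lia.
    + destruct H1'. lia.
  - destruct B as [<-|[HB|(H1'&H2'&H3'&H4')]].
    + right; right; auto.
    + destruct H2. lia.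
    + right; right. split; auto. split; auto. split; [congruence|].
      rewrite <- H3 in H4'. eapply Rel_trans; eauto.
Qed.
Lemma Gr_Ecl u u' : Gr u u' -> Ecl u u'.
Proof.
  unfold Gr, Ecl. intros [H|(H1 & H2 & H3 & H4 & H5)]. right; left. unfold gE in H; lia.
  right; right. split; auto. split; auto. split; auto.
  pose proof (cv_Rel u H2) as R1. pose proof (cv_Rel u' H3) as R2. rewrite <- H4 in R2.
  destruct H5 as [E|[E|[E|E]]].
  - rewrite E. apply Rel_refl.
  - rewrite E. apply Rel_sym; auto.
  - rewrite <- E. auto.
  - eapply Rel_trans. apply R1. rewrite E. apply Rel_sym; auto.
Qed.

Lemma walk_Ecl n u u' : walk Gr n u u' -> Ecl u u'.
Proof. induction 1. left; auto. eapply Ecl_trans. apply Gr_Ecl; eauto. auto. Qed.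

Lemma walk_app n1 n2 a b c : walk Gr n1 a b -> walk Gr n2 b c -> walk Gr (n1 + n2) a c.
Proof. induction 1; intros; simpl; auto. econstructor; eauto. Qed.
Lemma walk_rev n a b : walk Gr n a b -> walk Gr n b a.
Proof.
  induction 1. constructor. replace (S m0) with (m0 + 1) by lia. eapply walk_app; eauto.
  econstructor. apply Gr_sym; eauto. constructor.
Qed.
Lemma walk1 a b : Gr a b -> walk Gr 1 a b.
Proof. intros. econstructor; eauto. constructor. Qed.

Lemma gad_walk u u' : u < 4 -> u' < 4 -> exists n, n <= 3 /\ walk Gr n u u'.
Proof.
  assert (E01: walk Gr 1 0 1) by (apply walk1; left; unfold gE; lia).
  assert (E12: walk Gr 1 1 2) by (apply walk1; left; unfold gE; lia).
  assert (E23: walk Gr 1 2 3) by (apply walk1; left; unfold gE; lia).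
  assert (forall u u', u <= u' < 4 -> exists n, n <= 3 /\ walk Gr n u u').
  { intros a b Hab. destruct (Nat.eq_dec a b). subst. exists 0. split. lia. constructor.
    assert (a = 0 /\ b = 1 \/ a = 0 /\ b = 2 \/ a = 0 /\ b = 3 \/ a = 1 /\ b = 2 \/ a = 1 /\ b = 3 \/ a = 2 /\ b = 3) by lia.
    destruct H as [[-> ->]|[[-> ->]|[[-> ->]|[[-> ->]|[[-> ->]|[-> ->]]]]]].
    - exists 1. auto.
    - exists 2. split. lia. apply (walk_app 1 1 0 1 2); auto.
    - exists 3. split. lia. apply (walk_app 1 2 0 1 3); auto. apply (walk_app 1 1 1 2 3); auto.
    - exists 1. auto.
    - exists 2. split. lia. apply (walk_app 1 1 1 2 3); auto.
    - exists 1. auto. }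
  intros H1 H2. destruct (Nat.le_ge_cases u u'). apply H; lia.
  destruct (H u' u) as (n & ? & ?). lia. exists n. split; auto. apply walk_rev; auto.
Qed.

Lemma Ecl_walk u u' : Ecl u u' -> exists n, n <= 3 /\ walk Gr n u u'.
Proof.
  unfold Ecl. intros [->|[[H1 H2]|(H1 & H2 & H3 & H4)]].
  - exists 0. split. lia. constructor.
  - apply gad_walk; auto.
  - destruct (Nat.eq_dec u u') as [->|Hne]. exists 0. split. lia. constructor.
    destruct (classic (ov (u-4) (u'-4))) as [Hov|Hov].
    + exists 1. split. lia. apply walk1. right. refine (conj _ (conj _ (conj _ (conj _ _)))); auto.
    + destruct H4 as (L & HL1 & HL2).
      set (w := vtx (eOf (u-4)) (aOf (u-4)) (aOf (u'-4)) (clist L)).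
      destruct (vtx_f (eOf (u-4)) (aOf (u-4)) (aOf (u'-4)) (clist L)) as (F1 & F2 & F3 & F4).
      fold w in F1, F2, F3, F4.
      assert (Hw: cv w). { split. unfold w, vtx; lia. unfold cvL. rewrite F1, F2, F3, F4, dec_clist. auto. }
      assert (Hwu: w <> u). { intros E. apply Hov. unfold ov. rewrite <- E. rewrite F3. tauto. }
      assert (Hwu': w <> u'). { intros E. apply Hov. unfold ov. rewrite <- E. rewrite F2. tauto. }
      exists 2. split. lia. apply (walk_app 1 1 u w u').
      * apply walk1. right. refine (conj _ (conj _ (conj _ (conj _ _)))); auto. try (rewrite F1; auto). unfold ov. rewrite F2. tauto.
      * apply walk1. right. refine (conj _ (conj _ (conj _ (conj _ _)))); auto. try (rewrite F1; auto). unfold ov. rewrite F3. tauto.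
Qed.

Lemma conn_iff u u' : connected Gr u u' <-> Ecl u u'.
Proof.
  split. intros [n Hn]. eapply walk_Ecl; eauto.
  intros H. destruct (Ecl_walk u u' H) as (n & _ & Hn). exists n. auto.
Qed.

Lemma gad_dist n u : walk Gr n u 3 -> u < 4 -> 3 <= n + u.
Proof.
  intros H. remember 3 as t. induction H; intros Hu. lia.
  assert (b < 4 /\ (b = a + 1 \/ a = b + 1)).
  { destruct H as [H|(_ & [H _] & _)]. unfold gE in H. lia. lia. }
  specialize (IHwalk Heqt ltac:(lia)). lia.
Qed.

Lemma Gr_simple : simple_graph Gr.
Proof. split. apply Gr_irr. apply Gr_sym. Qed.

Lemma Gr_diam3 : diam_le Gr 3 /\ (forall j, diam_le Gr j -> 3 <= j).
Proof.
  split.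
  - intros u u' H. apply conn_iff in H. apply Ecl_walk. auto.
  - intros j Hj. destruct (Hj 0 3) as (n & H1 & H2). apply conn_iff. right; left; lia.
    pose proof (gad_dist n 0 H2). lia.
Qed.
End G.

Definition IfE (c : fm) (a b : ex) : ex := Pl (Ti (toB c) a) (Ti (toB (FNot c)) b).
Lemma den_IfE_t c a b env : sat c env -> den (IfE c a b) env = den a env.
Proof. intros H. unfold IfE. cbn [den]. rewrite toB_1, toB_0 by (cbn [sat]; tauto). lia. Qed.
Lemma den_IfE_f c a b env : ~ sat c env -> den (IfE c a b) env = den b env.
Proof. intros H. unfold IfE. cbn [den]. rewrite toB_0, toB_1 by (cbn [sat]; tauto). lia. Qed.

Definition stepG r tr :=
  if r =? 0 then 0 else if r - 1 =? src tr then dst tr + 1 else if r - 1 =? dst tr then src tr + 1 else 0.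
Fixpoint walkPos r L := match L with [] => r | tr :: L' => walkPos (stepG r tr) L' end.

Lemma walkPos_0 L : walkPos 0 L = 0.
Proof. induction L; simpl; auto. Qed.
Lemma walkPos_ok a L b : walkPos (S a) L = S b <-> walkT a L b.
Proof.
  revert a; induction L as [|tr L IH]; intros a; simpl. split; congruence.
  unfold stepG. simpl. rewrite Nat.sub_0_r.
  destruct (Nat.eqb_spec a (src tr)).
  - rewrite Nat.add_1_r, IH. subst. split. tauto. intros [[_ H]|[E H]]. auto. rewrite E in H. auto.
  - destruct (Nat.eqb_spec a (dst tr)).
    + rewrite Nat.add_1_r, IH. split. tauto. intros [[E _]|[_ H]]. congruence. auto.
    + rewrite walkPos_0. split. discriminate. tauto.
Qed.
Lemma walkPos_app r A x : walkPos r (A ++ [x]) = stepG (walkPos r A) x.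
Proof. revert r; induction A; simpl; auto. Qed.

Lemma firstn_S_snoc (l : list nat) n : n < length l -> firstn (S n) l = firstn n l ++ [nth n l 0].
Proof. revert l; induction n; intros [|x l] H; simpl in *; try lia. auto. f_equal. apply IHn. lia. Qed.

Definition trE := nthE (V 0) (V 2).
Definition stepF : ex :=
  IfE (FAnd (FT (itE (V 0) (V 2))) (FNe (V 1) (K 0)))
     (IfE (FEq (Mi (V 1) (K 1)) (p1E (p2E trE))) (Pl (p2E (p2E trE)) (K 1))
        (IfE (FEq (Mi (V 1) (K 1)) (p2E (p2E trE))) (Pl (p1E (p2E trE)) (K 1)) (K 0)))
     (V 1).
Definition posF : ex := Rc (V 1) (Pl (V 0) (K 1)) (Cl stepF [V 0; V 1; V 3]).

Lemma den_stepF i r L : den stepF [i; r; clist L] = if i <? length L then stepG r (nth i L 0) else r.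
Proof.
  unfold stepF. destruct (Nat.ltb_spec i (length L)).
  - destruct (Nat.eq_dec r 0).
    + subst. rewrite den_IfE_f. reflexivity. cbn [sat den nth]. intros [_ Hc]; apply Hc; reflexivity.
    + rewrite den_IfE_t. 2:{ cbn [sat den nth]. rewrite den_itE. cbn [den nth]. rewrite iterTl_nz. split; auto. }
      unfold trE. unfold stepG. destruct (Nat.eqb_spec r 0). lia.
      destruct (Nat.eqb_spec (r - 1) (src (nth i L 0))).
      * rewrite den_IfE_t. cbn [den]. rewrite den_p2E, den_p2E, den_nthE. cbn [den nth]. rewrite nthN_clist by auto. reflexivity.
        cbn [sat den nth]. rewrite den_p1E, den_p2E, den_nthE. cbn [den nth]. rewrite nthN_clist by auto. auto.
      * rewrite den_IfE_f. 2:{ cbn [sat den nth]. rewrite den_p1E, den_p2E, den_nthE. cbn [den nth]. rewrite nthN_clist by auto. auto. }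
        destruct (Nat.eqb_spec (r - 1) (dst (nth i L 0))).
        -- rewrite den_IfE_t. cbn [den]. rewrite den_p1E, den_p2E, den_nthE. cbn [den nth]. rewrite nthN_clist by auto. reflexivity.
           cbn [sat den nth]. rewrite den_p2E, den_p2E, den_nthE. cbn [den nth]. rewrite nthN_clist by auto. auto.
        -- rewrite den_IfE_f. reflexivity. cbn [sat den nth]. rewrite den_p2E, den_p2E, den_nthE. cbn [den nth]. rewrite nthN_clist by auto. auto.
  - rewrite den_IfE_f. reflexivity. cbn [sat den nth]. rewrite den_itE. cbn [den nth]. rewrite iterTl_nz. lia.
Qed.

Lemma den_posF a L : den posF [a; clist L] = walkPos (S a) L.
Proof.
  unfold posF. cbn [den map nth].
  assert (forall N, recN N (a + 1) (fun i r => den stepF [i; r; clist L]) = walkPos (S a) (firstn N L)).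
  { induction N; cbn [recN]. rewrite Nat.add_1_r. reflexivity.
    rewrite IHN, den_stepF. destruct (Nat.ltb_spec N (length L)).
    - rewrite firstn_S_snoc by auto. rewrite walkPos_app. reflexivity.
    - rewrite !firstn_all2 by lia. reflexivity. }
  rewrite H. rewrite firstn_all2. reflexivity. apply length_le_clist.
Qed.

Definition walkOKF (a s b : ex) : fm := FEq (Cl posF [a; s]) (Pl b (K 1)).
Lemma sat_walkOKF a s b env : sat (walkOKF a s b) env <-> walkT (den a env) (dec (den s env)) (den b env).
Proof.
  unfold walkOKF. cbn [sat den map]. rewrite <- (clist_dec (den s env)) at 1. rewrite den_posF.
  rewrite Nat.add_1_r. apply walkPos_ok.
Qed.

Definition tE u := Mi u (K 4).
Definition eE x := p1E x.
Definition aE x := p1E (p2E x).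
Definition bE x := p1E (p2E (p2E x)).
Definition sE x := p2E (p2E (p2E x)).
Lemma den_eE x env : den (eE x) env = eOf (den x env). Proof. unfold eE. rewrite den_p1E. reflexivity. Qed.
Lemma den_aE x env : den (aE x) env = aOf (den x env). Proof. unfold aE. rewrite den_p1E, den_p2E. reflexivity. Qed.
Lemma den_bE x env : den (bE x) env = bOf (den x env). Proof. unfold bE. rewrite den_p1E, !den_p2E. reflexivity. Qed.
Lemma den_sE x env : den (sE x) env = sOf (den x env). Proof. unfold sE. rewrite !den_p2E. reflexivity. Qed.
#[global] Opaque eE aE bE sE.

Definition C3 j x y z : fm :=
  FOr (FAnd (FLt j x) (FT (itE j x)))
   (FOr (FAnd (FNot (FLt j x)) (FAnd (FLt (Mi j x) y) (FT (itE (Mi j x) y))))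
        (FAnd (FNot (FLt j x)) (FAnd (FNot (FLt (Mi j x) y)) (FT (itE (Mi (Mi j x) y) z))))).
Definition C3N j x y z : Prop :=
  (j < x /\ iterTl j x <> 0) \/ (~ j < x /\ (j - x < y /\ iterTl (j - x) y <> 0)) \/
  (~ j < x /\ (~ j - x < y /\ iterTl (j - x - y) z <> 0)).
Lemma sat_C3 j x y z env : sat (C3 j x y z) env <-> C3N (den j env) (den x env) (den y env) (den z env).
Proof. unfold C3, C3N. cbn [sat]. iffs. Qed.

Definition tr3 j x y z : ex :=
  IfE (FLt j x) (nthE j x) (IfE (FLt (Mi j x) y) (nthE (Mi j x) y) (nthE (Mi (Mi j x) y) z)).
Definition tr3N j x y z := if j <? x then nthN j x else if j - x <? y then nthN (j - x) y else nthN (j - x - y) z.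
Lemma den_tr3 j x y z env : den (tr3 j x y z) env = tr3N (den j env) (den x env) (den y env) (den z env).
Proof.
  unfold tr3, tr3N. destruct (Nat.ltb_spec (den j env) (den x env)).
  - rewrite den_IfE_t by (cbn [sat]; auto). apply den_nthE.
  - rewrite den_IfE_f by (cbn [sat]; lia). destruct (Nat.ltb_spec (den j env - den x env) (den y env)).
    + rewrite den_IfE_t by (cbn [sat den]; auto). rewrite den_nthE. reflexivity.
    + rewrite den_IfE_f by (cbn [sat den]; lia). rewrite den_nthE. reflexivity.
Qed.
Definition args3 j x y z e :=
  [p1E (tr3 j x y z); p1E (p2E (tr3 j x y z)); p2E (p2E (tr3 j x y z)); e].
Lemma den_args3 j x y z e env : map (fun a => den a env) (args3 j x y z e) =
  let T := tr3N (den j env) (den x env) (den y env) (den z env) in [p1 T; src T; dst T; den e env].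
Proof. unfold args3. cbn [map]. repeat (rewrite ?den_p1E, ?den_p2E). rewrite !den_tr3. reflexivity. Qed.

Lemma Forall_dec (P : nat -> Prop) s : Forall P (dec s) <-> forall j, j < s -> iterTl j s <> 0 -> P (nthN j s).
Proof.
  remember (dec s) as L. assert (Hs: s = clist L) by (subst; symmetry; apply clist_dec). rewrite Hs. clear HeqL Hs.
  rewrite Forall_forall. split.
  - intros H j _ Hj. rewrite iterTl_nz in Hj. rewrite nthN_clist by auto. apply H. apply nth_In. auto.
  - intros H x Hx. apply In_nth with (d := 0) in Hx. destruct Hx as (j & Hj & <-).
    rewrite <- nthN_clist by auto. apply H. pose proof (length_le_clist L). lia. rewrite iterTl_nz; auto.
Qed.

Section S.
Variable m : nat.
Lemma nPtrip e tr : ~ Ptrip m e tr <-> M m (Dm m) [p1 tr; src tr; dst tr; e].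
Proof. unfold Ptrip. split. apply NNPP. tauto. Qed.

Lemma notForall_dec e s : ~ Forall (Ptrip m e) (dec s) <->
  exists j, j < s /\ iterTl j s <> 0 /\ ~ Ptrip m e (nthN j s).
Proof.
  rewrite Forall_dec. split.
  - intros H. apply not_all_ex_not in H. destruct H as [j H]. exists j.
    apply imply_to_and in H. destruct H as [H1 H]. apply imply_to_and in H. tauto.
  - intros (j & H1 & H2 & H3) H. apply H3. apply H; auto.
Qed.

Lemma bad3 e x y z : ~ (Forall (Ptrip m e) (dec x) /\ Forall (Ptrip m e) (dec y) /\ Forall (Ptrip m e) (dec z)) <->
  exists j, j < x + y + z /\ C3N j x y z /\
    (let T := tr3N j x y z in M m (Dm m) [p1 T; src T; dst T; e]).
Proof.
  unfold C3N, tr3N. split.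
  - intros H. apply not_and_or in H. destruct H as [H|H].
    + apply notForall_dec in H. destruct H as (j & H1 & H2 & H3). exists j. split. lia. split. left; auto.
      destruct (Nat.ltb_spec j x); [|lia]. apply nPtrip. auto.
    + apply not_and_or in H. destruct H as [H|H].
      * apply notForall_dec in H. destruct H as (j & H1 & H2 & H3). exists (x + j). split. lia.
        replace (x + j - x) with j by lia. split. right; left. split. lia. auto.
        destruct (Nat.ltb_spec (x + j) x); [lia|]. destruct (Nat.ltb_spec j y); [|lia]. apply nPtrip. auto.
      * apply notForall_dec in H. destruct H as (j & H1 & H2 & H3). exists (x + y + j). split. lia.
        replace (x + y + j - x) with (y + j) by lia. replace (y + j - y) with j by lia.
        split. right; right. split. lia. split. lia. auto.
        destruct (Nat.ltb_spec (x + y + j) x); [lia|]. destruct (Nat.ltb_spec (y + j) y); [lia|]. apply nPtrip. auto.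
  - intros (j & H1 & H2 & H3). cbv zeta in H3. apply nPtrip in H3.
    destruct H2 as [(H2 & H4)|[(H2 & H4 & H5)|(H2 & H4 & H5)]].
    + destruct (Nat.ltb_spec j x); [|lia]. intros (F & _). rewrite Forall_dec in F. apply H3. apply F; auto.
    + destruct (Nat.ltb_spec j x); [lia|]. destruct (Nat.ltb_spec (j - x) y); [|lia].
      intros (_ & F & _). rewrite Forall_dec in F. apply H3. apply F; auto.
    + destruct (Nat.ltb_spec j x); [lia|]. destruct (Nat.ltb_spec (j - x) y); [lia|].
      intros (_ & _ & F). rewrite Forall_dec in F. apply H3. apply F; auto.
      destruct (Nat.lt_ge_cases (j - x - y) z); auto. exfalso. apply H5.
      rewrite <- (clist_dec z). rewrite iterTl_clist. rewrite skipn_all2. reflexivity.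
      pose proof (length_le_clist (dec z)) as HL. rewrite clist_dec in HL. lia.
Qed.
End S.

Definition ovF t t' := FOr (FEq (aE t) (aE t')) (FOr (FEq (aE t) (bE t')) (FOr (FEq (bE t) (aE t')) (FEq (bE t) (bE t')))).
Lemma sat_ovF t t' env : sat (ovF t t') env <-> ov (den t env) (den t' env).
Proof. unfold ovF, ov. cbn [sat]. rewrite !den_aE, !den_bE. reflexivity. Qed.

Definition gEF := FOr (FAnd (FEq (V 0) (K 0)) (FEq (V 1) (K 1))) (FOr (FAnd (FEq (V 0) (K 1)) (FEq (V 1) (K 0)))
  (FOr (FAnd (FEq (V 0) (K 1)) (FEq (V 1) (K 2))) (FOr (FAnd (FEq (V 0) (K 2)) (FEq (V 1) (K 1)))
  (FOr (FAnd (FEq (V 0) (K 2)) (FEq (V 1) (K 3))) (FAnd (FEq (V 0) (K 3)) (FEq (V 1) (K 2))))))).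
Lemma sat_gEF u u' : sat gEF [u; u'] <-> gE u u'.
Proof. unfold gEF, gE. cbn [sat den nth]. reflexivity. Qed.

Definition SGF := let t := tE (V 0) in let t' := tE (V 1) in
  FAnd (FNe (V 0) (V 1)) (FAnd (FLt (K 3) (V 0)) (FAnd (FLt (K 3) (V 1))
   (FAnd (walkOKF (aE t) (sE t) (bE t)) (FAnd (walkOKF (aE t') (sE t') (bE t'))
   (FAnd (FEq (eE t) (eE t')) (ovF t t')))))).
Definition SGN u u' := let t := u - 4 in let t' := u' - 4 in
  u <> u' /\ 3 < u /\ 3 < u' /\ walkT (aOf t) (dec (sOf t)) (bOf t) /\ walkT (aOf t') (dec (sOf t')) (bOf t') /\
  eOf t = eOf t' /\ ov t t'.
Lemma sat_SGF u u' : sat SGF [u; u'] <-> SGN u u'.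
Proof.
  unfold SGF, SGN, FNe. cbn [sat]. rewrite !sat_walkOKF, sat_ovF. rewrite !den_aE, !den_bE, !den_sE, !den_eE.
  unfold tE. cbn [den nth]. reflexivity.
Qed.

Definition AGF := FAnd (FNot gEF) (FNot SGF).
Definition NGF := IfE (FAnd (FNot gEF) SGF) (Pl (Pl (sE (tE (V 0))) (sE (tE (V 1)))) (K 0)) (K 0).
Definition CGF := C3 (V 0) (sE (tE (V 1))) (sE (tE (V 2))) (K 0).
Definition argsG := args3 (V 0) (sE (tE (V 1))) (sE (tE (V 2))) (K 0) (eE (tE (V 1))).

Lemma Gr_notG m u u' : ~ Gr m u u' <->
  sat AGF [u;u'] \/ exists j, j < den NGF [u;u'] /\ sat CGF (j :: [u;u']) /\
     M m (sat (Dfm (m + 4))) (map (fun a => den a (j :: [u;u'])) argsG).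
Proof.
  unfold AGF. cbn [sat]. rewrite sat_gEF, sat_SGF.
  assert (Hdec0: dec 0 = []) by reflexivity.
  assert (HG: Gr m u u' <-> gE u u' \/ (SGN u u' /\ Forall (Ptrip m (eOf (u-4))) (dec (sOf (u-4))) /\
      Forall (Ptrip m (eOf (u-4))) (dec (sOf (u'-4))) /\ Forall (Ptrip m (eOf (u-4))) (dec 0))).
  { unfold Gr, SGN, cv, cvL. cbv zeta. rewrite Hdec0. split.
    - intros [H|(H1 & (H2 & H3 & H4) & (H5 & H6 & H7) & H8 & H9)]. auto. right.
      rewrite <- H8 in H7. refine (conj (conj _ (conj _ (conj _ (conj _ (conj _ (conj _ _)))))) (conj _ (conj _ _))); auto; lia.
    - intros [H|((H1 & H2 & H3 & H4 & H5 & H6 & H7) & F1 & F2 & _)]. auto. right.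
      rewrite <- H6. refine (conj _ (conj (conj _ (conj _ _)) (conj (conj _ (conj _ _)) (conj _ _)))); auto; try lia.
      }
  rewrite HG. unfold NGF.
  destruct (classic (gE u u')) as [Hg|Hg].
  - split. tauto. intros [H|(j & Hj & _)]. tauto. rewrite den_IfE_f in Hj. cbn in Hj. lia.
    cbn [sat]. rewrite sat_gEF. tauto.
  - destruct (classic (SGN u u')) as [Hs|Hs].
    + rewrite den_IfE_t by (cbn [sat]; rewrite sat_gEF, sat_SGF; tauto).
      cbn [den]. rewrite !den_sE. unfold tE. cbn [den nth].
      assert (E: ~ (Forall (Ptrip m (eOf (u-4))) (dec (sOf (u-4))) /\ Forall (Ptrip m (eOf (u-4))) (dec (sOf (u'-4))) /\
               Forall (Ptrip m (eOf (u-4))) (dec 0)) <-> _) by apply bad3.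
      split.
      * intros H. right. assert (H': ~ (Forall (Ptrip m (eOf (u-4))) (dec (sOf (u-4))) /\ Forall (Ptrip m (eOf (u-4))) (dec (sOf (u'-4))) /\
               Forall (Ptrip m (eOf (u-4))) (dec 0))) by tauto.
        apply E in H'. destruct H' as (j & H1 & H2 & H3). exists j. split. auto.
        unfold CGF, argsG. rewrite sat_C3, den_args3. unfold tE. cbn [den nth]. rewrite !den_sE, den_eE. cbn [den nth]. auto.
      * intros [H|(j & H1 & H2 & H3)]. tauto.
        unfold CGF, argsG in *. rewrite sat_C3 in H2. rewrite den_args3 in H3. unfold tE in *. cbn [den nth] in *.
        rewrite !den_sE, den_eE in *. cbn [den nth] in *.
        assert (H': exists j, j < sOf (u-4) + sOf (u'-4) + 0 /\ C3N j (sOf (u - 4)) (sOf (u' - 4)) 0 /\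
           (let T := tr3N j (sOf (u-4)) (sOf (u'-4)) 0 in M m (Dm m) [p1 T; src T; dst T; eOf (u-4)])).
        { exists j. auto. }
        apply E in H'. tauto.
    + split. intros _. left. tauto. intros _. tauto.
Qed.

Definition B0F := FOr (FEq (V 1) (V 2)) (FAnd (FLt (V 1) (K 4)) (FLt (V 2) (K 4))).
Definition SEF := let t := tE (V 1) in let t' := tE (V 2) in
  FAnd (FLt (K 3) (V 1)) (FAnd (FLt (K 3) (V 2))
   (FAnd (walkOKF (aE t) (sE t) (bE t)) (FAnd (walkOKF (aE t') (sE t') (bE t'))
   (FAnd (FEq (eE t) (eE t')) (walkOKF (aE t) (V 0) (aE t')))))).
Definition SEN c u u' := let t := u - 4 in let t' := u' - 4 in
  3 < u /\ 3 < u' /\ walkT (aOf t) (dec (sOf t)) (bOf t) /\ walkT (aOf t') (dec (sOf t')) (bOf t') /\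
  eOf t = eOf t' /\ walkT (aOf t) (dec c) (aOf t').
Lemma sat_SEF c u u' : sat SEF [c; u; u'] <-> SEN c u u'.
Proof.
  unfold SEF, SEN. cbn [sat]. rewrite !sat_walkOKF. rewrite !den_aE, !den_bE, !den_sE, !den_eE.
  unfold tE. cbn [den nth]. reflexivity.
Qed.
Definition AEF := FAnd (FNot B0F) (FNot SEF).
Definition NEF := IfE (FAnd (FNot B0F) SEF) (Pl (Pl (sE (tE (V 1))) (sE (tE (V 2)))) (V 0)) (K 0).
Definition CEF := C3 (V 0) (sE (tE (V 2))) (sE (tE (V 3))) (V 1).
Definition argsE := args3 (V 0) (sE (tE (V 2))) (sE (tE (V 3))) (V 1) (eE (tE (V 2))).

Lemma Ecl_inner m c u u' :
  (~ (u = u' \/ (u < 4 /\ u' < 4)) /\ ~ (SEN c u u' /\ Forall (Ptrip m (eOf (u-4))) (dec (sOf (u-4))) /\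
      Forall (Ptrip m (eOf (u-4))) (dec (sOf (u'-4))) /\ Forall (Ptrip m (eOf (u-4))) (dec c))) <->
  sat AEF [c;u;u'] \/ exists j, j < den NEF [c;u;u'] /\ sat CEF (j :: [c;u;u']) /\
     M m (sat (Dfm (m + 4))) (map (fun a => den a (j :: [c;u;u'])) argsE).
Proof.
  assert (HB: sat B0F [c;u;u'] <-> (u = u' \/ (u < 4 /\ u' < 4))) by (unfold B0F; cbn [sat den nth]; reflexivity).
  unfold AEF, NEF. cbn [sat]. rewrite HB, sat_SEF.
  destruct (classic (u = u' \/ (u < 4 /\ u' < 4))) as [Hg|Hg].
  - split. tauto. intros [H|(j & Hj & _)]. tauto. rewrite den_IfE_f in Hj. cbn in Hj. lia.
    cbn [sat]. rewrite HB. tauto.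
  - destruct (classic (SEN c u u')) as [Hs|Hs].
    + rewrite den_IfE_t by (cbn [sat]; rewrite HB, sat_SEF; tauto).
      cbn [den]. rewrite !den_sE. unfold tE. cbn [den nth].
      pose proof (bad3 m (eOf (u-4)) (sOf (u-4)) (sOf (u'-4)) c) as E.
      split.
      * intros H. right. assert (H': ~ (Forall (Ptrip m (eOf (u-4))) (dec (sOf (u-4))) /\ Forall (Ptrip m (eOf (u-4))) (dec (sOf (u'-4))) /\
               Forall (Ptrip m (eOf (u-4))) (dec c))) by tauto.
        apply E in H'. destruct H' as (j & H1 & H2 & H3). exists j. split. auto.
        unfold CEF, argsE. rewrite sat_C3, den_args3. unfold tE. cbn [den nth]. rewrite !den_sE, den_eE. cbn [den nth]. auto.
      * intros [H|(j & H1 & H2 & H3)]. tauto.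
        unfold CEF, argsE in *. rewrite sat_C3 in H2. rewrite den_args3 in H3. unfold tE in *. cbn [den nth] in *.
        rewrite !den_sE, den_eE in *. cbn [den nth] in *.
        assert (H': exists j, j < sOf (u-4) + sOf (u'-4) + c /\ C3N j (sOf (u - 4)) (sOf (u' - 4)) c /\
           (let T := tr3N j (sOf (u-4)) (sOf (u'-4)) c in M m (Dm m) [p1 T; src T; dst T; eOf (u-4)])).
        { exists j. auto. }
        apply E in H'. tauto.
    + split. intros _. left. tauto. intros _. tauto.
Qed.

Lemma Ecl_ex m u u' : Ecl m u u' <-> exists c, ~ (~ (u = u' \/ (u < 4 /\ u' < 4)) /\
    ~ (SEN c u u' /\ Forall (Ptrip m (eOf (u-4))) (dec (sOf (u-4))) /\
      Forall (Ptrip m (eOf (u-4))) (dec (sOf (u'-4))) /\ Forall (Ptrip m (eOf (u-4))) (dec c))).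
Proof.
  unfold Ecl, SEN, cv, cvL, Rel. cbv zeta. split.
  - intros [H|[H|((H1 & H2 & H3) & (H4 & H5 & H6) & H7 & (L & H8 & H9))]].
    + exists 0. tauto.
    + exists 0. tauto.
    + exists (clist L). rewrite dec_clist. rewrite <- H7 in H6.
      intros [_ H]. apply H. refine (conj (conj _ (conj _ (conj _ (conj _ (conj _ _))))) (conj _ (conj _ _))); auto; lia.
  - intros [c H]. apply not_and_or in H. destruct H as [H|H]. apply NNPP in H. tauto.
    apply NNPP in H. destruct H as ((H1 & H2 & H3 & H4 & H5 & H6) & F1 & F2 & F3).
    right; right. rewrite <- H5 in *. refine (conj (conj _ (conj _ _)) (conj (conj _ (conj _ _)) (conj _ _))); auto; try lia.
    all: try (rewrite <- H5; auto). exists (dec c). auto.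
Qed.

Lemma conn_equiv (G : nat -> nat -> Prop) : (forall a b, G a b -> G b a) -> equivalence_rel (connected G).
Proof.
  intros Hs.
  assert (Happ: forall n1 n2 a b c, walk G n1 a b -> walk G n2 b c -> walk G (n1 + n2) a c).
  { intros n1 n2 a b c H. revert n2 c. induction H; intros; simpl; auto. econstructor; eauto. }
  split; [|split].
  - intros a. exists 0. constructor.
  - intros a b [n H]. exists n. induction H. constructor. replace (S m) with (m + 1) by lia.
    eapply Happ; eauto. econstructor. apply Hs; eauto. constructor.
  - intros a b c [n1 H1] [n2 H2]. exists (n1 + n2). eauto.
Qed.

Lemma E_sigma m : Sigma_rel (S m) (connected (Gr m)).
Proof.
  destruct (Mbex m 3 (Dfm (m + 4)) AEF NEF CEF argsE) as (Q & HQ & HQe).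
  unfold Sigma_rel. apply (Sigma_ext (S m) 2 (M (S m) Q)).
  - intros v Hv. destruct v as [|u [|u' [|]]]; simpl in Hv; try lia. cbn [rel2].
    rewrite conn_iff, Ecl_ex. cbn [M]. apply ex_iff. intros c. apply iff_not.
    rewrite HQe by reflexivity. rewrite <- Ecl_inner. reflexivity.
  - apply Sigma_of_M. replace (S m + 2) with (m + 3) by lia. auto.
Qed.

Lemma G_pi m : Pi_rel m (Gr m).
Proof.
  destruct (Mbex m 2 (Dfm (m + 4)) AGF NGF CGF argsG) as (Q & HQ & HQe).
  unfold Pi_rel, Pi. apply (Sigma_ext m 2 (M m Q)).
  - intros v Hv. destruct v as [|u [|u' [|]]]; simpl in Hv; try lia. cbn [rel2].
    rewrite HQe by reflexivity. rewrite Gr_notG. reflexivity.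
  - apply Sigma_of_M. auto.
Qed.

Definition fE (ec : nat) : ex := Pl (K 4) (pairE (K ec) (pairE (V 0) (pairE (V 0) (K 0)))).
Lemma fE_den ec x : den (fE ec) [x] = vtx ec x x 0.
Proof. unfold fE, vtx. cbn [den]. rewrite !den_pairE. reflexivity. Qed.

Lemma universality m F : equivalence_rel F -> Sigma_rel (S m) F ->
  exists f, computable_fun f /\ forall a b, F a b <-> connected (Gr m) (f a) (f b).
Proof.
  intros [Fr [Fs Ft]] HF. apply M_of_Sigma in HF. destruct HF as (B & (c & Hc) & HB).
  assert (HW: forall x y, F x y <-> M (S m) (Dm m) [x; y; code c]).
  { intros x y. rewrite (HB [x;y] eq_refl). cbn [rel2]. unfold Dm. apply W_univ.
    intros v Hv. apply Hc. lia. }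
  assert (HR: forall L a b, walkT a L b -> Forall (Ptrip m (code c)) L -> F a b).
  { induction L as [|tr L IH]; intros a b Hw Hf; simpl in Hw.
    - subst. auto.
    - inversion Hf; subst. assert (Ft0: F (src tr) (dst tr)).
      { apply HW. exists (p1 tr). auto. }
      destruct Hw as [(-> & Hw)|(-> & Hw)].
      + eapply Ft; eauto.
      + eapply Ft. apply Fs. eauto. eauto. }
  exists (fun x => vtx (code c) x x 0). split.
  - exists (comp 1 (fE (code c))). intros x. rewrite <- fE_den. apply comp_ok. reflexivity.
  - intros a b. rewrite conn_iff. unfold Ecl.
    destruct (vtx_f (code c) a a 0) as (A1 & A2 & A3 & A4).
    destruct (vtx_f (code c) b b 0) as (B1 & B2 & B3 & B4).
    assert (Hcv: forall x, cv m (vtx (code c) x x 0)).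
    { intros x. destruct (vtx_f (code c) x x 0) as (X1 & X2 & X3 & X4). split. unfold vtx; lia.
      unfold cvL. rewrite X1, X2, X3, X4. simpl. split; auto. }
    split.
    + intros H. right; right. split; auto. split; auto. rewrite A1, B1. split; auto. rewrite A2, B2.
      apply HW in H. destruct H as [w Hw]. exists [pair w (pair a b)]. split.
      * simpl. left. unfold src, dst. rewrite !p2_pair, !p1_pair. auto.
      * constructor; auto. unfold Ptrip, src, dst. rewrite !p2_pair, !p1_pair. auto.
    + intros [H|[H|(_ & _ & _ & (L & H1 & H2))]].
      * apply vtx_inj in H. destruct H as (_ & -> & _). auto.
      * unfold vtx in H. lia.
      * rewrite A1, A2, B2 in *. eapply HR; eauto.
Qed.

Theorem proposition2p6 :
  forall n : nat, 1 <= n ->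
    exists E : nat -> nat -> Prop,
      universal_Sigma n E /\ Pi_graphable_diam (n - 1) E 3.
Proof.
  intros n Hn. destruct n as [|m]. lia. replace (S m - 1) with m by lia.
  exists (connected (Gr m)). split.
  - split. apply conn_equiv. apply Gr_sym. split. apply E_sigma.
    intros F HF HS. apply universality; auto.
  - exists (Gr m). split. apply Gr_simple. split. apply G_pi. split. reflexivity.
    apply Gr_diam3.
Qed.
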